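(* For $\mathbf{q}, \mathbf{r}\in(\mathbb{Z}_{\ge0})^{n}$ with $n\ge1$, we have \[\frac{d}{d\sigma}f_{\mathbf{q}}^{\mathbf{r}}(\sigma) = i(i\sigma)^{q_{n}}\left(\mathrm{Li}_{1}(e^{i\sigma})\right)^{r_{n}}f_{\mathbf{q}_{-}}^{\mathbf{r}_{-}}(\sigma).\]
   Context: Notation: $|\mathbf{k}|=k_1+\dots+k_n$, $\mathbf{k}_{-}=(k_1,\dots,k_{n-1})$. $\mathrm{Li}_{\mathbf{k}}(z)=\sum_{0<m_1<\dots<m_n} z^{m_n}/(m_1^{k_1}\cdots m_n^{k_n})$, $\mathrm{Li}_\emptyset=1$; $\sigma\in[0,2\pi]$. Let $B_{\mathbf{q}}=\frac{1}{|\mathbf{q}|+n}B_{\mathbf{q}_-}$, $B_\emptyset=1$; $C_{\mathbf{q}}^{\mathbf{j}}=(-1)^{j_n}\frac{(|\mathbf{q}|-|\mathbf{j}_-|)!}{(|\mathbf{q}|-|\mathbf{j}|)!}C_{\mathbf{q}_-}^{\mathbf{j}_-}$, $C_\emptyset^\emptyset=1$. Write $\mathbf{j}\preceq\mathbf{q}$ if $j_1+\dots+j_s\le q_1+\dots+q_s$ for all $s$. Let $\mathfrak{H}=\mathbb{Q}\langle e_0,e_1\rangle$, $\mathfrak{H}^1=\mathbb{Q}+e_1\mathfrak{H}$, with shuffle product $\sqcup\!\sqcup$: $w\sqcup\!\sqcup 1=1\sqcup\!\sqcup w=w$, $u_1w_1\sqcup\!\sqcup u_2w_2=u_1(w_1\sqcup\!\sqcup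 u_2w_2)+u_2(u_1w_1\sqcup\!\sqcup w_2)$ ($u_i\in\{e_0,e_1\}$), $\mathbb{Q}$-bilinear. Define $w_{\mathbf{j}}^{\mathbf{r}}=(w_{\mathbf{j}_-}^{\mathbf{r}_-}\sqcup\!\sqcup e_1^{\sqcup\!\sqcup r_n})e_0^{1+j_n}$, $w_\emptyset^\emptyset=1$ ($e_1^{\sqcup\!\sqcup r}$ = $r$-fold shuffle of $e_1$). $L(\cdot;z):\mathfrak{H}^1\to\mathbb{C}$ is $\mathbb{Q}$-linear with $L(e_1e_0^{k_1-1}\cdots e_1e_0^{k_n-1};z)=\mathrm{Li}_{k_1,\dots,k_n}(z)$, $L(1;z)=1$ (it satisfies $L(w_1;z)L(w_2;z)=L(w_1\sqcup\!\sqcup w_2;z)$). For $\mathbf{q},\mathbf{r}\in(\mathbb{Z}_{\ge0})^n$ write $\mathbf{r}=(\{0\}^{n'},r''_1,\dots,r''_{n''})=(\mathbf{r}',\mathbf{r}'')$ with $r''_1\ge1$, $\mathbf{q}=(\mathbf{q}',\mathbf{q}'')$ with $\mathbf{q}'$ of length $n'$, and $\overline{\mathbf{q}}=(|\mathbf{q}'|+n'+q''_1,q''_2,\dots,q''_{n''})$ (or $\emptyset$ if $\mathbf{q}''=\emptyset$). Define $f_{\mathbf{q}}^{\mathbf{r}}(\sigma)=B_{\mathbf{q}'}\sum_{\mathbf{j}\preceq\overline{\mathbf{q}}}C_{\overline{\mathbf{q}}}^{\mathbf{j}}(i\sigma)^{|\mathbf{q}|+n'-|\mathbf{j}|}L(w_{\mathbf{j}}^{\mathbf{r}''};e^{i\sigma})$,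 sum over $\mathbf{j}\in(\mathbb{Z}_{\ge0})^{n''}$; thus $f_{\emptyset}^{\emptyset}=1$ and $f_{\mathbf{q}}^{\mathbf{r}}(\sigma)=B_{\mathbf{q}}(i\sigma)^{|\mathbf{q}|+n}$ if $\mathbf{r}=(\{0\}^n)$, $n\ge1$. *)

(* Defs.v *)
From Stdlib Require Import Reals List Arith.
From Coquelicot Require Import Coquelicot.
Import ListNotations.
Open Scope R_scope.

Fixpoint rsum (n : nat) (F : nat -> R) : R :=
  match n with O => 0 | S n' => rsum n' F + F n' end.
Fixpoint rprod (n : nat) (F : nat -> R) : R :=
  match n with O => 1 | S n' => rprod n' F * F n' end.
Definition Csum (l : list C) : C := fold_right Cplus (RtoC 0) l.

Definition lsum (k : list nat) : nat := fold_right Nat.add 0%nat k.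

(* Ainner k m = sum_{0 < m_1 < ... < m_p < m} 1/(m_1^{k_1} ... m_p^{k_p}),
   k = (k_1,...,k_p); Ainner [] m = 1. *)
Definition Ainner (k : list nat) : nat -> R :=
  fold_left (fun (F : nat -> R) (p : nat) =>
               fun m => rsum m (fun t => if Nat.eqb t 0 then 0
                                         else F t / (INR t) ^ p))
            k (fun _ => 1).

Definition Cseries (u : nat -> C) : C :=
  (Series (fun m => fst (u m)), Series (fun m => snd (u m))).

(* Li_k(z) = sum_{0<m_1<...<m_n} z^{m_n}/(m_1^{k_1}...m_n^{k_n}),
   summed as the limit over m_n of the partial sums; Li_[] = 1. *)
Definition Li (k : list nat) (z : C) : C :=
  match k with
  | [] => RtoC 1
  | _ => Cseries (fun m =>
           Cmult (RtoC (Ainner (List.removelast k) (S m) / (INR (S m)) ^ (List.last k 0%nat)))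
                 (Cpow z (S m)))
  end.

(* a word is a list bool: true = e1, false = e0.  An element of H with
   nonnegative integer coefficients (all elements that occur below) is
   represented by a list of words, i.e. the formal sum of its entries. *)
Fixpoint shuffle (u v : list bool) : list (list bool) :=
  match u with
  | [] => [v]
  | a :: u' =>
      (fix sh2 (v : list bool) : list (list bool) :=
         match v with
         | [] => [u]
         | b :: v' => map (cons a) (shuffle u' v) ++ map (cons b) (sh2 v')
         end) v
  end.

Definition shuffleL (W1 W2 : list (list bool)) : list (list bool) :=
  flat_map (fun u => flat_map (fun v => shuffle u v) W2) W1.

Fixpoint e1sh (r : nat) : list (list bool) :=
  match r with O => [[]] | S r' => shuffleL [[true]] (e1sh r') end.

Definition rmulL (W : list (list bool)) (x : list bool) : list (list bool) :=
  map (fun w => w ++ x) W.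

(* w_j^r = (w_{j-}^{r-} sh e1^{sh r_n}) e0^{1+j_n}, w_[]^[] = 1 *)
Definition wjr (j r : list nat) : list (list bool) :=
  fold_left (fun W (jr : nat * nat) =>
               rmulL (shuffleL W (e1sh (snd jr))) (repeat false (S (fst jr))))
            (combine j r) [[]].

(* index of a word e1 e0^{k1-1} ... e1 e0^{kn-1} is (k1,...,kn) *)
Definition word_index (w : list bool) : list nat :=
  rev (fold_left (fun acc (b : bool) =>
                    if b then (1%nat :: acc)
                    else match acc with [] => [] | k :: acc' => S k :: acc' end)
                 w []).

(* L(.;z) : H^1 -> C, Q-linear, L(e1 e0^{k1-1}...;z) = Li_k(z), L(1;z) = 1 *)
Definition Lmap (W : list (list bool)) (z : C) : C :=
  Csum (map (fun w => Li (word_index w) z) W).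

(* B_q = 1/(|q|+n) B_{q-}, B_[] = 1 *)
Definition Bcoef (q : list nat) : R :=
  rprod (length q) (fun s => / INR (lsum (firstn (S s) q) + S s)).

(* C_q^j = (-1)^{j_n} (|q|-|j_-|)!/(|q|-|j|)! C_{q-}^{j-}, C_[]^[] = 1 *)
Definition Ccoef (q j : list nat) : R :=
  rprod (length q) (fun s =>
    (-1) ^ (nth s j 0%nat) *
    INR (fact (lsum (firstn (S s) q) - lsum (firstn s j))) /
    INR (fact (lsum (firstn (S s) q) - lsum (firstn (S s) j)))).

Definition precb (j q : list nat) : bool :=
  forallb (fun s => Nat.leb (lsum (firstn s j)) (lsum (firstn s q)))
          (seq 0 (S (length q))).

Fixpoint lists_upto (m b : nat) : list (list nat) :=
  match m with
  | O => [[]]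
  | S m' => flat_map (fun x => map (cons x) (lists_upto m' b)) (seq 0 (S b))
  end.

(* { j in N^m : j ⪯ q }  (entries are automatically <= |q|) *)
Definition prec_set (q : list nat) : list (list nat) :=
  filter (fun j => precb j q) (lists_upto (length q) (lsum q)).

Fixpoint lead0 (r : list nat) : nat :=
  match r with 0%nat :: r' => S (lead0 r') | _ => 0%nat end.

Definition Ci : C := (0, 1).
Definition eis (s : R) : C := (cos s, sin s).

Definition qbar (q r : list nat) : list nat :=
  let n' := lead0 r in
  match skipn n' q with
  | [] => []
  | x :: rest => (lsum (firstn n' q) + n' + x)%nat :: rest
  end.

Definition fqr (q r : list nat) (s : R) : C :=
  let n' := lead0 r in
  let r'' := skipn n' r in
  let qb := qbar q r in
  Cmult (RtoC (Bcoef (firstn n' q)))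
    (Csum (map (fun j =>
       Cmult (RtoC (Ccoef qb j))
        (Cmult (Cpow (Cmult Ci (RtoC s)) (lsum q + n' - lsum j))
               (Lmap (wjr j r'') (eis s))))
      (prec_set qb))).

(* Main.v *)
Require Import Defs.
From Stdlib Require Import Reals List Arith Lra Lia Psatz Permutation.
From Coquelicot Require Import Coquelicot.
Import ListNotations.
Open Scope R_scope.


Lemma rsum_S n F : rsum (S n) F = rsum n F + F n.
Proof. reflexivity. Qed.

Lemma rsum_ext n F G : (forall k, (k < n)%nat -> F k = G k) -> rsum n F = rsum n G.
Proof.
  induction n; intros H; simpl; auto.
  rewrite IHn by (intros; apply H; lia). rewrite H by lia. reflexivity.
Qed.

Lemma rsum_plus n F G : rsum n (fun k => F k + G k) = rsum n F + rsum n G.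
Proof. induction n; simpl; [lra|rewrite IHn; lra]. Qed.

Lemma rsum_scal n a F : rsum n (fun k => a * F k) = a * rsum n F.
Proof. induction n; simpl; [lra|rewrite IHn; lra]. Qed.

Lemma rsum_opp n F : rsum n (fun k => - F k) = - rsum n F.
Proof. induction n; simpl; [lra|rewrite IHn; lra]. Qed.

Lemma rsum_zero n : rsum n (fun _ => 0) = 0.
Proof. induction n; simpl; [lra|rewrite IHn; lra]. Qed.

Lemma sum_n_rsum F n : sum_n F n = rsum (S n) F.
Proof.
  induction n.
  - rewrite sum_O. simpl. lra.
  - rewrite sum_Sn, IHn. reflexivity.
Qed.

Lemma rsum_tail_le F G p n :
  (forall m, (p <= m)%nat -> (m < p + n)%nat -> Rabs (F m) <= G m) ->
  Rabs (rsum (p + n) F - rsum p F) <= rsum (p + n) G - rsum p G.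
Proof.
  induction n; intros H.
  - rewrite Nat.add_0_r. rewrite Rminus_diag, Rabs_R0. lra.
  - replace (p + S n)%nat with (S (p + n)) by lia. rewrite !rsum_S.
    assert (H1 := H (p + n)%nat ltac:(lia) ltac:(lia)).
    assert (H2 := IHn ltac:(intros; apply H; lia)).
    replace (rsum (p + n) F + F (p + n)%nat - rsum p F) with
      ((rsum (p + n) F - rsum p F) + F (p+n)%nat) by ring.
    eapply Rle_trans; [apply Rabs_triang|]. lra.
Qed.

Lemma rsum_tele f p n :
  rsum (p + n) (fun m => f m - f (S m)) - rsum p (fun m => f m - f (S m)) = f p - f (p + n)%nat.
Proof.
  induction n.
  - rewrite Nat.add_0_r. ring.
  - replace (p + S n)%nat with (S (p + n)) by lia. rewrite rsum_S.
    replace (rsum (p + n) (fun m : nat => f m - f (S m)) + (f (p + n)%nat - f (S (p + n))) -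
      rsum p (fun m : nat => f m - f (S m))) with
     ((rsum (p + n) (fun m : nat => f m - f (S m)) - rsum p (fun m : nat => f m - f (S m))) +
      (f (p + n)%nat - f (S (p + n)))) by ring.
    rewrite IHn. ring.
Qed.

Lemma abel_sum (b e : nat -> R) p n :
  rsum (p + n) (fun m => b m * e m) - rsum p (fun m => b m * e m) =
  b (p + n)%nat * (rsum (p + n) e - rsum p e) +
  (rsum (p + n) (fun m => (b m - b (S m)) * (rsum (S m) e - rsum p e)) -
   rsum p (fun m => (b m - b (S m)) * (rsum (S m) e - rsum p e))).
Proof.
  induction n.
  - rewrite Nat.add_0_r. ring.
  - replace (p + S n)%nat with (S (p + n)) by lia. rewrite !rsum_S.
    set (E := rsum p e) in *.
    set (X := rsum (p + n) (fun m : nat => b m * e m)) in *.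
    set (Y := rsum p (fun m : nat => b m * e m)) in *.
    set (Z := rsum (p + n) (fun m : nat => (b m - b (S m)) * (rsum (S m) e - E))) in *.
    set (W := rsum p (fun m : nat => (b m - b (S m)) * (rsum (S m) e - E))) in *.
    simpl rsum.
    replace (X + b (p + n)%nat * e (p + n)%nat - Y) with ((X - Y) + b (p + n)%nat * e (p + n)%nat) by ring.
    rewrite IHn. ring.
Qed.

Lemma abel_bound (b e : nat -> R) p q K :
  (p <= q)%nat ->
  (forall k, (p <= k)%nat -> (k <= q)%nat -> Rabs (rsum k e - rsum p e) <= K) ->
  Rabs (rsum q (fun m => b m * e m) - rsum p (fun m => b m * e m)) <=
  K * (Rabs (b q) + (rsum q (fun m => Rabs (b m - b (S m))) - rsum p (fun m => Rabs (b m - b (S m))))).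
Proof.
  intros Hpq HK.
  assert (K0 : 0 <= K).
  { specialize (HK p (le_n p) Hpq). rewrite Rminus_diag, Rabs_R0 in HK. exact HK. }
  replace q with (p + (q - p))%nat by lia.
  rewrite abel_sum.
  eapply Rle_trans; [apply Rabs_triang|].
  rewrite Rmult_plus_distr_l.
  apply Rplus_le_compat.
  - rewrite Rabs_mult.
    assert (Rabs (rsum (p + (q - p)) e - rsum p e) <= K) by (apply HK; lia).
    assert (0 <= Rabs (b (p + (q - p))%nat)) by apply Rabs_pos. nra.
  - eapply Rle_trans; [apply rsum_tail_le with (G := fun m => K * Rabs (b m - b (S m)))|].
    + intros m H1 H2. rewrite Rabs_mult.
      assert (Rabs (rsum (S m) e - rsum p e) <= K) by (apply HK; lia).
      assert (0 <= Rabs (b m - b (S m))) by apply Rabs_pos. nra.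
    + rewrite !rsum_scal. lra.
Qed.

Definition Good (c : nat -> R) (C : R) : Prop :=
  forall m, (1 <= m)%nat ->
    Rabs (c m) <= C / sqrt (INR m) /\
    Rabs (c m - c (S m)) <= C * (/ sqrt (INR m) - / sqrt (INR (S m))).

Lemma sqrt_INR_pos m : (1 <= m)%nat -> 0 < sqrt (INR m).
Proof. intros. apply sqrt_lt_R0. apply lt_0_INR. lia. Qed.

Lemma inv_sqrt_decr p q : (1 <= p)%nat -> (p <= q)%nat -> / sqrt (INR q) <= / sqrt (INR p).
Proof.
  intros H1 H2. apply Rinv_le_contravar. apply sqrt_INR_pos; auto.
  apply sqrt_le_1_alt. apply le_INR. auto.
Qed.

Lemma Good_C c C : Good c C -> 0 <= C.
Proof.
  intros H. destruct (H 1%nat (le_n 1)) as [H1 _].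
  assert (0 < sqrt (INR 1)) by (apply sqrt_INR_pos; lia).
  assert (0 <= C / sqrt (INR 1)) by (eapply Rle_trans; [apply Rabs_pos|exact H1]).
  unfold Rdiv in H0. apply Rmult_le_reg_r with (/ sqrt (INR 1)).
  apply Rinv_0_lt_compat; auto. lra.
Qed.

Lemma pow_le_one t m : 0 <= t <= 1 -> t ^ m <= 1.
Proof.
  intros Ht. induction m; simpl; [lra|].
  assert (0 <= t ^ m) by (apply pow_le; lra). nra.
Qed.

Lemma good_tail (c e : nat -> R) C K t p q :
  Good c C -> 0 <= t <= 1 -> (1 <= p)%nat -> (p <= q)%nat ->
  (forall k, (p <= k)%nat -> Rabs (rsum k e - rsum p e) <= K) ->
  Rabs (rsum q (fun m => c m * t ^ m * e m) - rsum p (fun m => c m * t ^ m * e m))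
    <= 3 * C * K / sqrt (INR p).
Proof.
  intros HG Ht Hp Hpq HK.
  assert (K0 : 0 <= K).
  { specialize (HK p (le_n p)). rewrite Rminus_diag, Rabs_R0 in HK. exact HK. }
  assert (C0 := Good_C _ _ HG).
  assert (Sp := sqrt_INR_pos p Hp).
  assert (Ht' : forall m, 0 <= t ^ m <= 1).
  { intros m. split. apply pow_le; lra. apply pow_le_one; lra. }
  eapply Rle_trans.
  { apply (abel_bound (fun m => c m * t ^ m) e p q K Hpq). intros; apply HK; auto. }
  unfold Rdiv. rewrite (Rmult_comm (3 * C) K). rewrite Rmult_assoc.
  apply Rmult_le_compat_l; auto.
  assert (B1 : Rabs (c q * t ^ q) <= C * / sqrt (INR p)).
  { rewrite Rabs_mult. destruct (HG q ltac:(lia)) as [H1 _].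
    assert (Rabs (t ^ q) <= 1) by (rewrite Rabs_pos_eq; apply Ht').
    assert (C / sqrt (INR q) <= C * / sqrt (INR p)).
    { unfold Rdiv. apply Rmult_le_compat_l; auto. apply inv_sqrt_decr; auto. }
    apply Rle_trans with (Rabs (c q) * 1).
    apply Rmult_le_compat_l; [apply Rabs_pos|auto]. lra. }
  assert (B2 : rsum q (fun m => Rabs (c m * t ^ m - c (S m) * t ^ S m)) -
               rsum p (fun m => Rabs (c m * t ^ m - c (S m) * t ^ S m)) <= 2 * C * / sqrt (INR p)).
  { replace q with (p + (q - p))%nat by lia.
    assert (HH : forall m, (p <= m)%nat -> (m < p + (q - p))%nat ->
      Rabs (Rabs (c m * t ^ m - c (S m) * t ^ S m)) <=
      C * (/ sqrt (INR m) - / sqrt (INR (S m))) + C * / sqrt (INR p) * (t ^ m - t ^ S m)).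
    { intros m H1 H2. rewrite Rabs_Rabsolu.
      replace (c m * t ^ m - c (S m) * t ^ S m) with
        ((c m - c (S m)) * t ^ S m + c m * (t ^ m - t ^ S m)) by (simpl; ring).
      eapply Rle_trans; [apply Rabs_triang|].
      destruct (HG m ltac:(lia)) as [H3 H4].
      apply Rplus_le_compat.
      - rewrite Rabs_mult. rewrite (Rabs_pos_eq (t ^ S m)) by apply Ht'.
        apply Rle_trans with (Rabs (c m - c (S m)) * 1).
        apply Rmult_le_compat_l; [apply Rabs_pos|apply Ht']. lra.
      - rewrite Rabs_mult.
        assert (0 <= t ^ m - t ^ S m).
        { simpl. assert (0 <= t ^ m) by apply Ht'. nra. }
        rewrite (Rabs_pos_eq (t ^ m - t ^ S m)) by auto.
        apply Rmult_le_compat_r; auto.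
        eapply Rle_trans; [exact H3|]. unfold Rdiv. apply Rmult_le_compat_l; auto.
        apply inv_sqrt_decr; lia. }
    eapply Rle_trans; [apply (Rle_trans _ _ _ (Rle_abs _)); apply (rsum_tail_le _ _ p (q - p) HH)|].
    rewrite rsum_plus, rsum_plus.
    rewrite (rsum_scal (p + (q - p))), (rsum_scal p).
    rewrite (rsum_scal (p + (q - p)) (C * / sqrt (INR p))), (rsum_scal p (C * / sqrt (INR p))).
    replace (C * rsum (p + (q - p)) (fun k : nat => / sqrt (INR k) - / sqrt (INR (S k))) +
      C * / sqrt (INR p) * rsum (p + (q - p)) (fun k : nat => t ^ k - t ^ S k) -
      (C * rsum p (fun k : nat => / sqrt (INR k) - / sqrt (INR (S k))) +
       C * / sqrt (INR p) * rsum p (fun k : nat => t ^ k - t ^ S k))) with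
      (C * (rsum (p + (q - p)) (fun k : nat => / sqrt (INR k) - / sqrt (INR (S k))) -
            rsum p (fun k : nat => / sqrt (INR k) - / sqrt (INR (S k)))) +
       C * / sqrt (INR p) * (rsum (p + (q - p)) (fun k : nat => t ^ k - t ^ S k) -
            rsum p (fun k : nat => t ^ k - t ^ S k))) by ring.
    rewrite (rsum_tele (fun k => / sqrt (INR k))), (rsum_tele (fun k => t ^ k)).
    assert (0 <= / sqrt (INR (p + (q - p)))).
    { apply Rlt_le, Rinv_0_lt_compat, sqrt_INR_pos; lia. }
    assert (0 <= t ^ (p + (q - p))) by apply Ht'.
    assert (t ^ p <= 1) by apply Ht'.
    assert (0 <= C * / sqrt (INR p)) by (apply Rmult_le_pos; auto; apply Rlt_le, Rinv_0_lt_compat; auto).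
    nra. }
  lra.
Qed.


Lemma small_inv_sqrt A eps : 0 < eps -> exists N, (1 <= N)%nat /\
  forall n, (N <= n)%nat -> A / sqrt (INR n) < eps.
Proof.
  intros He. destruct (INR_unbounded ((A / eps) ^ 2)) as [N0 HN0].
  exists (max 1 N0). split; [lia|]. intros n Hn.
  assert (Sn : 0 < sqrt (INR n)) by (apply sqrt_INR_pos; lia).
  destruct (Rle_or_lt A 0) as [HA|HA].
  - unfold Rdiv. assert (0 < / sqrt (INR n)) by (apply Rinv_0_lt_compat; auto). nra.
  - assert (INR N0 <= INR n) by (apply le_INR; lia).
    assert (H2 : sqrt ((A / eps) ^ 2) < sqrt (INR n)).
    { apply sqrt_lt_1_alt. split; [apply pow2_ge_0|lra]. }
    rewrite sqrt_pow2 in H2 by (apply Rlt_le; unfold Rdiv; apply Rmult_lt_0_compat; auto; apply Rinv_0_lt_compat; auto).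
    apply Rmult_lt_reg_r with (sqrt (INR n)); auto.
    unfold Rdiv. rewrite Rmult_assoc, Rinv_l by lra. rewrite Rmult_1_r.
    unfold Rdiv in H2. apply Rmult_lt_compat_r with (r := eps) in H2; auto.
    rewrite Rmult_assoc, Rinv_l in H2 by lra. lra.
Qed.

Lemma is_series_rsum u (l : R) : is_lim_seq (fun n => rsum n u) l -> is_series u l.
Proof.
  intros H. apply is_lim_seq_incr_1 in H.
  unfold is_series. eapply filterlim_ext; [|exact H].
  intros n. simpl. rewrite sum_n_rsum. reflexivity.
Qed.

Lemma is_series_rsum' u (l : R) : is_series u l -> is_lim_seq (fun n => rsum n u) l.
Proof.
  intros H. apply is_lim_seq_incr_1.
  eapply filterlim_ext; [|exact H].
  intros n. simpl. rewrite sum_n_rsum. reflexivity.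
Qed.

Lemma tail_series (u : nat -> R) (A : R) :
  (forall p q, (1 <= p)%nat -> (p <= q)%nat -> Rabs (rsum q u - rsum p u) <= A / sqrt (INR p)) ->
  is_series u (Series u) /\
  forall p, (1 <= p)%nat -> Rabs (Series u - rsum p u) <= A / sqrt (INR p).
Proof.
  intros H.
  assert (Hc : ex_lim_seq_cauchy (fun n => rsum n u)).
  { intros eps. destruct (small_inv_sqrt A (eps / 2)) as [N [HN1 HN]].
    { destruct eps; simpl; lra. }
    exists N. intros n m Hn Hm.
    assert (H1 := H N n HN1 Hn). assert (H2 := H N m HN1 Hm).
    assert (H3 := HN N (le_n N)).
    replace (rsum n u - rsum m u) with ((rsum n u - rsum N u) - (rsum m u - rsum N u)) by ring.
    eapply Rle_lt_trans; [apply Rabs_triang|]. rewrite Rabs_Ropp. lra. }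
  apply ex_lim_seq_cauchy_corr in Hc. destruct Hc as [l Hl].
  assert (Hs : is_series u l) by (apply is_series_rsum; auto).
  rewrite (is_series_unique u l Hs).
  split; auto.
  intros p Hp.
  assert (Hlim : is_lim_seq (fun n => Rabs (rsum n u - rsum p u)) (Rabs (l - rsum p u))).
  { apply (is_lim_seq_abs _ (Finite (l - rsum p u))).
    apply is_lim_seq_minus'; auto. apply is_lim_seq_const. }
  assert (Hle := is_lim_seq_le_loc (fun n => Rabs (rsum n u - rsum p u)) (fun _ => A / sqrt (INR p))
     _ _ ltac:(exists p; intros n Hn; apply H; auto) Hlim (is_lim_seq_const _)).
  simpl in Hle. exact Hle.
Qed.

Lemma cos_tele s m :
  2 * sin (s / 2) * cos (INR m * s) = sin ((INR m + / 2) * s) - sin ((INR m - / 2) * s).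
Proof.
  replace ((INR m + / 2) * s) with (INR m * s + s / 2) by field.
  replace ((INR m - / 2) * s) with (INR m * s - s / 2) by field.
  rewrite sin_plus, sin_minus. ring.
Qed.

Lemma sin_tele s m :
  2 * sin (s / 2) * sin (INR m * s) = cos ((INR m - / 2) * s) - cos ((INR m + / 2) * s).
Proof.
  replace ((INR m + / 2) * s) with (INR m * s + s / 2) by field.
  replace ((INR m - / 2) * s) with (INR m * s - s / 2) by field.
  rewrite cos_plus, cos_minus. ring.
Qed.

Lemma rsum_cos s p n : 2 * sin (s / 2) * (rsum (p + n) (fun m => cos (INR m * s)) - rsum p (fun m => cos (INR m * s)))
  = sin ((INR (p + n) - / 2) * s) - sin ((INR p - / 2) * s).
Proof.
  induction n.
  - rewrite Nat.add_0_r. ring.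
  - replace (p + S n)%nat with (S (p + n)) by lia. rewrite rsum_S.
    replace (2 * sin (s / 2) * (rsum (p + n) (fun m : nat => cos (INR m * s)) + cos (INR (p + n) * s) -
      rsum p (fun m : nat => cos (INR m * s)))) with
     (2 * sin (s / 2) * (rsum (p + n) (fun m : nat => cos (INR m * s)) - rsum p (fun m : nat => cos (INR m * s)))
      + 2 * sin (s / 2) * cos (INR (p + n) * s)) by ring.
    rewrite IHn, cos_tele, S_INR.
    replace ((INR (p + n) + 1 - / 2) * s) with ((INR (p + n) + / 2) * s) by field. ring.
Qed.

Lemma rsum_sin s p n : 2 * sin (s / 2) * (rsum (p + n) (fun m => sin (INR m * s)) - rsum p (fun m => sin (INR m * s)))
  = cos ((INR p - / 2) * s) - cos ((INR (p + n) - / 2) * s).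
Proof.
  induction n.
  - rewrite Nat.add_0_r. ring.
  - replace (p + S n)%nat with (S (p + n)) by lia. rewrite rsum_S.
    replace (2 * sin (s / 2) * (rsum (p + n) (fun m : nat => sin (INR m * s)) + sin (INR (p + n) * s) -
      rsum p (fun m : nat => sin (INR m * s)))) with
     (2 * sin (s / 2) * (rsum (p + n) (fun m : nat => sin (INR m * s)) - rsum p (fun m : nat => sin (INR m * s)))
      + 2 * sin (s / 2) * sin (INR (p + n) * s)) by ring.
    rewrite IHn, sin_tele, S_INR.
    replace ((INR (p + n) + 1 - / 2) * s) with ((INR (p + n) + / 2) * s) by field. ring.
Qed.

Lemma cos_tail s p k : 0 < sin (s / 2) -> (p <= k)%nat ->
  Rabs (rsum k (fun m => cos (INR m * s)) - rsum p (fun m => cos (INR m * s))) <= / sin (s / 2).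
Proof.
  intros Hs Hk. replace k with (p + (k - p))%nat by lia.
  set (X := rsum (p + (k - p)) (fun m => cos (INR m * s)) - rsum p (fun m => cos (INR m * s))).
  assert (H := rsum_cos s p (k - p)). fold X in H.
  assert (H1 := SIN_bound ((INR (p + (k - p)) - / 2) * s)).
  assert (H2 := SIN_bound ((INR p - / 2) * s)).
  assert (Rabs (2 * sin (s / 2) * X) <= 2) by (rewrite H; apply Rabs_le; lra).
  rewrite Rabs_mult, (Rabs_pos_eq (2 * sin (s / 2))) in H0 by lra.
  apply Rmult_le_reg_l with (sin (s / 2)); auto.
  rewrite Rinv_r by lra. lra.
Qed.

Lemma sin_tail s p k : 0 < sin (s / 2) -> (p <= k)%nat ->
  Rabs (rsum k (fun m => sin (INR m * s)) - rsum p (fun m => sin (INR m * s))) <= / sin (s / 2).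
Proof.
  intros Hs Hk. replace k with (p + (k - p))%nat by lia.
  set (X := rsum (p + (k - p)) (fun m => sin (INR m * s)) - rsum p (fun m => sin (INR m * s))).
  assert (H := rsum_sin s p (k - p)). fold X in H.
  assert (H1 := COS_bound ((INR (p + (k - p)) - / 2) * s)).
  assert (H2 := COS_bound ((INR p - / 2) * s)).
  assert (Rabs (2 * sin (s / 2) * X) <= 2) by (rewrite H; apply Rabs_le; lra).
  rewrite Rabs_mult, (Rabs_pos_eq (2 * sin (s / 2))) in H0 by lra.
  apply Rmult_le_reg_l with (sin (s / 2)); auto.
  rewrite Rinv_r by lra. lra.
Qed.


Lemma good_series c e C K t :
  Good c C -> 0 <= t <= 1 ->
  (forall p k, (p <= k)%nat -> Rabs (rsum k e - rsum p e) <= K) ->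
  is_series (fun m => c m * t ^ m * e m) (Series (fun m => c m * t ^ m * e m)) /\
  forall p, (1 <= p)%nat ->
    Rabs (Series (fun m => c m * t ^ m * e m) - rsum p (fun m => c m * t ^ m * e m)) <= 3 * C * K / sqrt (INR p).
Proof.
  intros HG Ht HK. apply tail_series.
  intros p q Hp Hq. apply good_tail; auto.
Qed.

Lemma continuity_rsum (F : nat -> R -> R) n x :
  (forall m, continuity_pt (F m) x) -> continuity_pt (fun t => rsum n (fun m => F m t)) x.
Proof.
  intros H. induction n.
  - simpl. apply continuity_pt_const. intros a b; reflexivity.
  - simpl. apply (continuity_pt_plus (fun t => rsum n (fun m => F m t)) (F n)); auto.
Qed.

Lemma good_abel c e C K (tn : nat -> R) :
  Good c C ->
  (forall p k, (p <= k)%nat -> Rabs (rsum k e - rsum p e) <= K) ->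
  (forall n, 0 <= tn n <= 1) -> is_lim_seq tn 1 ->
  is_lim_seq (fun n => Series (fun m => c m * tn n ^ m * e m)) (Series (fun m => c m * 1 ^ m * e m)).
Proof.
  intros HG HK Ht Hlim.
  apply is_lim_seq_spec. intros eps.
  destruct (small_inv_sqrt (3 * C * K) (eps / 3)) as [p [Hp1 Hp]].
  { destruct eps; simpl; lra. }
  assert (Hc : continuity_pt (fun t => rsum p (fun m => c m * t ^ m * e m)) 1).
  { apply (continuity_rsum (fun m t => c m * t ^ m * e m)). intros m.
    apply continuity_pt_mult; [|apply continuity_pt_const; intros a b; reflexivity].
    apply continuity_pt_mult; [apply continuity_pt_const; intros a b; reflexivity|].
    apply derivable_continuous_pt. apply derivable_pt_pow. }
  assert (HL := is_lim_seq_continuous _ _ _ Hc Hlim).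
  apply is_lim_seq_spec in HL. destruct (HL (mkposreal (eps / 3) ltac:(destruct eps; simpl; lra))) as [N HN].
  exists N. intros n Hn. specialize (HN n Hn). simpl in HN.
  destruct (good_series c e C K (tn n) HG (Ht n) HK) as [_ B1].
  destruct (good_series c e C K 1 HG ltac:(lra) HK) as [_ B2].
  specialize (B1 p Hp1). specialize (B2 p Hp1). specialize (Hp p (le_n p)).
  set (A1 := Series (fun m : nat => c m * tn n ^ m * e m)) in *.
  set (A2 := Series (fun m : nat => c m * 1 ^ m * e m)) in *.
  set (P1 := rsum p (fun m : nat => c m * tn n ^ m * e m)) in *.
  set (P2 := rsum p (fun m : nat => c m * 1 ^ m * e m)) in *.
  replace (A1 - A2) with ((A1 - P1) + (P1 - P2) - (A2 - P2)) by ring.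
  eapply Rle_lt_trans; [apply Rabs_triang|].
  rewrite Rabs_Ropp.
  assert (Rabs (A1 - P1 + (P1 - P2)) <= Rabs (A1 - P1) + Rabs (P1 - P2)) by apply Rabs_triang.
  lra.
Qed.

Lemma sin_lower r x : 0 < r <= PI -> r / 2 <= x <= PI - r / 2 -> sin (r / 2) <= sin x.
Proof.
  intros Hr Hx. assert (PI_pos := PI_RGT_0).
  destruct (Rle_or_lt x (PI / 2)) as [H|H].
  - apply sin_incr_1; lra.
  - rewrite <- (sin_PI_x x). apply sin_incr_1; lra.
Qed.

Lemma rsum_pow1 n (F : nat -> R) : rsum n (fun m => F m) = rsum n (fun m => (F m / 1) * 1 ^ m * 1).
Proof. apply rsum_ext. intros. rewrite pow1. field. Qed.

Lemma derivable_rsum (F F' : nat -> R -> R) n x :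
  (forall m, derivable_pt_lim (F m) x (F' m x)) ->
  derivable_pt_lim (fun t => rsum n (fun m => F m t)) x (rsum n (fun m => F' m x)).
Proof.
  intros H. induction n.
  - simpl. apply derivable_pt_lim_const.
  - simpl. apply (derivable_pt_lim_plus (fun t => rsum n (fun m => F m t)) (F n)); auto.
Qed.

Lemma Good_ext c c' C : Good c C -> (forall m, (1 <= m)%nat -> c' m = c m) -> Good c' C.
Proof.
  intros H E m Hm. rewrite !E by lia. apply H; auto.
Qed.

Lemma Good_opp c C : Good c C -> Good (fun m => - c m) C.
Proof.
  intros H m Hm. destruct (H m Hm) as [H1 H2]. split.
  - rewrite Rabs_Ropp. auto.
  - replace (- c m - - c (S m)) with (- (c m - c (S m))) by ring. rewrite Rabs_Ropp. auto.
Qed.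

Lemma good_series1 c e C K :
  Good c C ->
  (forall p k, (p <= k)%nat -> Rabs (rsum k e - rsum p e) <= K) ->
  is_series (fun m => c m * e m) (Series (fun m => c m * e m)) /\
  forall p, (1 <= p)%nat ->
    Rabs (Series (fun m => c m * e m) - rsum p (fun m => c m * e m)) <= 3 * C * K / sqrt (INR p).
Proof.
  intros HG HK. destruct (good_series c e C K 1 HG ltac:(lra) HK) as [H1 H2].
  assert (E : forall m, c m * 1 ^ m * e m = c m * e m) by (intros; rewrite pow1; ring).
  rewrite (Series_ext _ _ E) in H1, H2. split.
  - eapply is_series_ext; [exact E|exact H1].
  - intros p Hp. specialize (H2 p Hp).
    rewrite (rsum_ext p (fun m => c m * 1 ^ m * e m) (fun m => c m * e m)) in H2 by auto. exact H2.
Qed.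

Lemma circle_deriv_gen (c d : nat -> R) (e e' : nat -> R -> R) C s0 :
  Good c C -> 0 < s0 < 2 * PI ->
  (forall m, (1 <= m)%nat -> d m * INR m = c m) ->
  (forall x, 0 < sin (x / 2) -> forall p k, (p <= k)%nat ->
     Rabs (rsum k (fun m => e m x) - rsum p (fun m => e m x)) <= / sin (x / 2)) ->
  (forall x, c 0%nat * e 0%nat x = 0) ->
  (forall m x, derivable_pt_lim (e' m) x (INR m * e m x)) ->
  (forall x, 0 < x < 2 * PI -> is_series (fun m => d m * e' m x) (Series (fun m => d m * e' m x))) ->
  derivable_pt_lim (fun x => Series (fun m => d m * e' m x)) s0 (Series (fun m => c m * e m s0)).
Proof.
  intros HG Hs0 Hdc Htail He0 Hder Hser.
  assert (PI_pos := PI_RGT_0).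
  set (r0 := Rmin s0 (2 * PI - s0) / 2).
  assert (Hr0 : 0 < r0).
  { unfold r0. apply Rmin_case; lra. }
  assert (Hr1 : r0 <= s0 / 2) by (unfold r0; assert (Rmin s0 (2 * PI - s0) <= s0) by apply Rmin_l; lra).
  assert (Hr2 : r0 <= (2 * PI - s0) / 2) by (unfold r0; assert (Rmin s0 (2 * PI - s0) <= 2 * PI - s0) by apply Rmin_r; lra).
  set (r := mkposreal r0 Hr0).
  set (K0 := / sin (r0 / 2)).
  assert (Hsr : 0 < sin (r0 / 2)) by (apply sin_gt_0; lra).
  assert (Hball : forall y, Boule s0 r y -> 0 < y < 2 * PI /\ 0 < sin (y / 2) /\ / sin (y / 2) <= K0).
  { intros y Hy. unfold Boule in Hy. simpl in Hy. apply Rabs_def2 in Hy.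
    assert (0 < y < 2 * PI) by lra. split; auto.
    assert (sin (r0 / 2) <= sin (y / 2)) by (apply sin_lower; lra).
    split; [lra|]. unfold K0. apply Rinv_le_contravar; lra. }
  set (c' := fun m => d m * INR m).
  assert (HG' : Good c' C).
  { apply Good_ext with c; [exact HG|]. intros m Hm. unfold c'. apply Hdc; auto. }
  set (f := fun n x => rsum n (fun m => d m * e' m x)).
  set (f' := fun n x => rsum n (fun m => c' m * e m x)).
  set (g := fun x => Series (fun m => d m * e' m x)).
  set (g' := fun x => Series (fun m => c' m * e m x)).
  assert (Hfin : derivable_pt_lim g s0 (g' s0)).
  { apply (CVU_derivable f f' g g' s0 r); cycle 3.
    { unfold Boule. simpl. rewrite Rminus_diag, Rabs_R0. lra. }
    - intros eps Heps.
      destruct (small_inv_sqrt (3 * C * K0) eps Heps) as [N [HN1 HN]].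
      exists N. intros n y Hn Hy.
      destruct (Hball y Hy) as [Hy1 [Hy2 Hy3]].
      destruct (good_series1 c' (fun m => e m y) C K0 HG') as [_ B].
      { intros p k Hpk. eapply Rle_trans; [apply Htail; auto|exact Hy3]. }
      unfold g', f'. eapply Rle_lt_trans; [apply B; lia|]. apply HN; auto.
    - intros x Hx. destruct (Hball x Hx) as [Hx1 _].
      apply is_lim_seq_Reals. apply is_series_rsum'. apply Hser; auto.
    - intros n x Hx. unfold f, f'.
      apply (derivable_rsum (fun m t => d m * e' m t) (fun m x => c' m * e m x)).
      intros m. unfold c'. rewrite Rmult_assoc.
      apply (derivable_pt_lim_scal (e' m)). apply Hder. }
  unfold g, g' in Hfin.
  replace (Series (fun m => c m * e m s0)) with (Series (fun m => c' m * e m s0)). exact Hfin.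
  apply Series_ext. intros [|m].
  - unfold c'. rewrite (He0 s0). simpl INR. ring.
  - unfold c'. rewrite Hdc by lia. reflexivity.
Qed.


Lemma shuffle_nil_r u : shuffle u [] = [u].
Proof. destruct u; reflexivity. Qed.

Lemma shuffle_nil_l v : shuffle [] v = [v].
Proof. reflexivity. Qed.

Lemma shuffle_cons x u y v :
  shuffle (x :: u) (y :: v) = map (cons x) (shuffle u (y :: v)) ++ map (cons y) (shuffle (x :: u) v).
Proof. reflexivity. Qed.

Lemma shuffle_back u v a b :
  Permutation (shuffle (u ++ [a]) (v ++ [b]))
    (map (fun w => w ++ [a]) (shuffle u (v ++ [b])) ++ map (fun w => w ++ [b]) (shuffle (u ++ [a]) v)).
Proof.
  revert v. induction u as [|x u IHu]; intros v.
  - induction v as [|y v IHv].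
    + simpl. apply perm_swap.
    + simpl app. rewrite shuffle_cons. rewrite !shuffle_nil_l.
      simpl app in IHv. rewrite IHv.
      simpl. rewrite !map_map. apply perm_swap.
  - induction v as [|y v IHv].
    + simpl app. rewrite shuffle_cons. rewrite !shuffle_nil_r.
      specialize (IHu []). simpl app in IHu. rewrite IHu. rewrite !shuffle_nil_r.
      rewrite !map_app, !map_map.
      rewrite <- !app_assoc. apply Permutation_app_head.
      simpl. rewrite <- !app_assoc. simpl. apply perm_swap.
    + simpl app. rewrite shuffle_cons.
      simpl app in IHv. rewrite IHv.
      specialize (IHu (y :: v)). simpl app in IHu. rewrite IHu.
      rewrite !map_app, !map_map.
      rewrite <- !app_assoc. apply Permutation_app_head.
      rewrite !app_assoc. apply Permutation_app_tail.
      apply Permutation_app_swap.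
Qed.

Definition H1 (w : list bool) : Prop := match w with [] => True | b :: _ => b = true end.

Lemma shuffle_props u v w : In w (shuffle u v) ->
  length w = (length u + length v)%nat /\ (H1 u -> H1 v -> H1 w).
Proof.
  revert v w. induction u as [|x u IHu]; intros v w.
  - rewrite shuffle_nil_l. intros [<-|[]]. simpl; auto.
  - intros Hw; revert w Hw. induction v as [|y v IHv]; intros w.
    + rewrite shuffle_nil_r. intros [<-|[]]. simpl. split; auto. lia.
    + rewrite shuffle_cons. intros Hin. apply in_app_or in Hin. destruct Hin as [Hin|Hin];
        apply in_map_iff in Hin; destruct Hin as [w' [<- Hw']].
      * destruct (IHu _ _ Hw') as [H1' _]. simpl in *. split; [lia|auto].
      * destruct (IHv _ Hw') as [H1' _]. simpl in *. split; [lia|auto].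
Qed.

Definition wstep (acc : list nat) (b : bool) : list nat :=
  if b then (1%nat :: acc) else match acc with [] => [] | k :: acc' => S k :: acc' end.

Lemma word_index_eq w : word_index w = rev (fold_left wstep w []).
Proof. reflexivity. Qed.

Lemma fold_wstep_nonnil w acc : acc <> [] -> fold_left wstep w acc <> [].
Proof.
  revert acc. induction w as [|b w IH]; intros acc H; simpl; auto.
  apply IH. destruct b; simpl; [discriminate|destruct acc; [contradiction|discriminate]].
Qed.

Lemma word_index_snoc_true w : word_index (w ++ [true]) = word_index w ++ [1%nat].
Proof. rewrite !word_index_eq, fold_left_app. simpl. reflexivity. Qed.

Lemma H1_nonnil_fold w : H1 w -> w <> [] -> fold_left wstep w [] <> [].
Proof.
  destruct w as [|b w]; [contradiction|]. simpl. intros -> _. apply fold_wstep_nonnil. discriminate.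
Qed.

Lemma word_index_snoc_false w : H1 w -> w <> [] ->
  removelast (word_index (w ++ [false])) = removelast (word_index w) /\
  last (word_index (w ++ [false])) 0%nat = S (last (word_index w) 0%nat) /\
  word_index w <> [].
Proof.
  intros H Hn. rewrite !word_index_eq, fold_left_app.
  assert (Hf := H1_nonnil_fold w H Hn).
  destruct (fold_left wstep w []) as [|k acc]; [contradiction|].
  simpl. rewrite !removelast_last, !last_last.
  split; [reflexivity|split; [reflexivity|]].
  intros E. destruct (rev acc); discriminate.
Qed.

Lemma fold_wstep_pos w acc : List.Forall (fun k => (1 <= k)%nat) acc ->
  List.Forall (fun k => (1 <= k)%nat) (fold_left wstep w acc).
Proof.
  revert acc. induction w as [|b w IH]; intros acc H; simpl; auto.
  apply IH. destruct b; simpl; auto. destruct acc; auto. inversion H; subst. constructor; auto.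
Qed.

Lemma word_index_pos w : List.Forall (fun k => (1 <= k)%nat) (word_index w).
Proof. rewrite word_index_eq. apply Forall_rev. apply fold_wstep_pos. constructor. Qed.

Definition astep (F : nat -> R) (p : nat) : nat -> R :=
  fun m => rsum m (fun t => if Nat.eqb t 0 then 0 else F t / (INR t) ^ p).

Lemma Ainner_eq k : Ainner k = fold_left astep k (fun _ => 1).
Proof. reflexivity. Qed.

Lemma Ainner_snoc k p : Ainner (k ++ [p]) = astep (Ainner k) p.
Proof. rewrite !Ainner_eq, fold_left_app. reflexivity. Qed.

Definition cidx (k : list nat) (m : nat) : R :=
  match k with
  | [] => if Nat.eqb m 0 then 1 else 0
  | _ => Ainner (removelast k) m / INR m ^ (last k 0%nat)
  end.

Definition cw (w : list bool) : nat -> R := cidx (word_index w).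

Definition cW (W : list (list bool)) (m : nat) : R := fold_right Rplus 0 (map (fun w => cw w m) W).

Lemma cW_nil m : cW [] m = 0.
Proof. reflexivity. Qed.
Lemma cW_cons w W m : cW (w :: W) m = cw w m + cW W m.
Proof. reflexivity. Qed.
Lemma cW_app U V m : cW (U ++ V) m = cW U m + cW V m.
Proof. induction U; simpl; [unfold cW; simpl; ring|]. rewrite !cW_cons, IHU. ring. Qed.

Lemma cW_perm U V m : Permutation U V -> cW U m = cW V m.
Proof.
  intros H. induction H; auto.
  - rewrite !cW_cons, IHPermutation; auto.
  - rewrite !cW_cons. ring.
  - congruence.
Qed.



Lemma wi_nonnil w : H1 w -> w <> [] -> word_index w <> [].
Proof.
  intros H Hn. rewrite word_index_eq. assert (Hf := H1_nonnil_fold w H Hn).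
  destruct (fold_left wstep w []) as [|k acc]; [contradiction|]. simpl.
  intros E. destruct (rev acc); discriminate.
Qed.

Lemma last_pos k : List.Forall (fun k => (1 <= k)%nat) k -> k <> [] -> (1 <= last k 0)%nat.
Proof.
  intros H Hk. rewrite (app_removelast_last 0%nat Hk) in H. apply Forall_app in H.
  destruct H as [_ H]. inversion H; auto.
Qed.

Lemma cidx_nonnil k m : k <> [] -> cidx k m = Ainner (removelast k) m / INR m ^ (last k 0%nat).
Proof. destruct k; [contradiction|reflexivity]. Qed.

Lemma H1_snoc w a : H1 w -> w <> [] -> H1 (w ++ [a]).
Proof. destruct w; simpl; auto. Qed.

Lemma H1_prefix w a : H1 (w ++ [a]) -> H1 w.
Proof. destruct w; simpl; auto. Qed.

Lemma pow0_pos p : (1 <= p)%nat -> 0 ^ p = 0.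
Proof. intros. destruct p; [lia|]. simpl. ring. Qed.

Lemma cidx_zero k : List.Forall (fun k => (1 <= k)%nat) k -> k <> [] -> cidx k 0 = 0.
Proof.
  intros H Hk. rewrite cidx_nonnil by auto. simpl INR.
  rewrite pow0_pos by (apply last_pos; auto). unfold Rdiv. rewrite Rinv_0. ring.
Qed.

Lemma cw_zero w : H1 w -> w <> [] -> cw w 0 = 0.
Proof. intros. unfold cw. apply cidx_zero; [apply word_index_pos|apply wi_nonnil; auto]. Qed.

Lemma cw_nilw m : cw [] m = if Nat.eqb m 0 then 1 else 0.
Proof. reflexivity. Qed.

Lemma cw_snoc_false w m : H1 w -> w <> [] -> cw (w ++ [false]) m * INR m = cw w m.
Proof.
  intros H Hn. destruct (word_index_snoc_false w H Hn) as [E1 [E2 E3]].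
  assert (Hn' : word_index (w ++ [false]) <> []).
  { apply wi_nonnil. apply H1_snoc; auto. destruct w; [contradiction|discriminate]. }
  unfold cw. rewrite !cidx_nonnil by auto. rewrite E1, E2.
  destruct m as [|m].
  - simpl INR. assert (HP := last_pos _ (word_index_pos w) E3).
    rewrite !pow0_pos by lia. unfold Rdiv. rewrite Rinv_0. ring.
  - assert (0 < INR (S m)) by (apply lt_0_INR; lia).
    set (x := INR (S m)) in *. set (p := last (word_index w) 0%nat).
    change (x ^ S p) with (x * x ^ p). field. split; [apply pow_nonzero; lra|lra].
Qed.

Lemma rsum_delta m : (1 <= m)%nat -> rsum m (fun t => if Nat.eqb t 0 then 1 else 0) = 1.
Proof.
  induction m; intros H; [lia|]. destruct m.
  - simpl. lra.
  - rewrite rsum_S. rewrite IHm by lia. simpl. lra.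
Qed.

Lemma cw_snoc_true w m : H1 w -> cw (w ++ [true]) m * INR m = rsum m (cw w).
Proof.
  intros H. unfold cw at 1. rewrite word_index_snoc_true.
  rewrite cidx_nonnil by (intros E; destruct (word_index w); discriminate).
  rewrite removelast_last, last_last.
  destruct m as [|m]; [simpl; ring|].
  assert (0 < INR (S m)) by (apply lt_0_INR; lia).
  replace (Ainner (word_index w) (S m) / INR (S m) ^ 1 * INR (S m)) with (Ainner (word_index w) (S m))
    by (field; apply not_0_INR; lia).
  unfold cw. destruct (word_index w) as [|k0 k] eqn:Ek.
  - change (Ainner [] (S m)) with 1. symmetry. apply rsum_delta. lia.
  - set (kk := k0 :: k) in *.
    assert (Hkk : kk <> []) by discriminate.
    assert (Hpos := word_index_pos w). rewrite Ek in Hpos. fold kk in Hpos.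
    rewrite (app_removelast_last 0%nat Hkk) at 1. rewrite Ainner_snoc. unfold astep.
    apply rsum_ext. intros t Ht. destruct t as [|t].
    + rewrite (cidx_zero kk) by auto. reflexivity.
    + rewrite cidx_nonnil by auto. reflexivity.
Qed.

Definition Dop (a : bool) (c : nat -> R) (m : nat) : R := if a then rsum m c else c m.

Lemma cw_snoc w a m : H1 w -> H1 (w ++ [a]) -> cw (w ++ [a]) m * INR m = Dop a (cw w) m.
Proof.
  intros H H'. destruct a; simpl.
  - apply cw_snoc_true; auto.
  - apply cw_snoc_false; auto. intros ->. simpl in H'. discriminate.
Qed.

Lemma Dop_cW a L m : Dop a (cW L) m = fold_right Rplus 0 (map (fun w => Dop a (cw w) m) L).
Proof.
  induction L as [|w L IH].
  - destruct a; simpl; auto. apply rsum_zero.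
  - simpl. rewrite <- IH. destruct a; simpl; auto.
    unfold cW. simpl. apply rsum_plus.
Qed.

Lemma cW_map_snoc a L m :
  (forall w, In w L -> H1 w /\ H1 (w ++ [a])) ->
  cW (map (fun w => w ++ [a]) L) m * INR m = Dop a (cW L) m.
Proof.
  intros H. rewrite Dop_cW. induction L as [|w L IH].
  - unfold cW; simpl; ring.
  - rewrite map_cons, cW_cons. simpl.
    rewrite <- IH by (intros; apply H; simpl; auto).
    rewrite <- (cw_snoc w a m) by (apply H; simpl; auto). ring.
Qed.

Definition conv (c d : nat -> R) (m : nat) : R := sum_f_R0 (fun k => c k * d (m - k)%nat) m.

Lemma conv_Dl c d m : sum_f_R0 (fun k => rsum k c * d (m - k)%nat) m = rsum m (conv c d).
Proof.
  induction m.
  - simpl. ring.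
  - rewrite decomp_sum by lia. simpl pred. rewrite rsum_S. rewrite <- IHm.
    unfold conv. change (rsum 0 c) with 0. rewrite Rmult_0_l, Rplus_0_l.
    rewrite <- sum_plus. apply sum_eq. intros i Hi.
    replace (S m - S i)%nat with (m - i)%nat by lia. simpl. ring.
Qed.

Lemma conv_Dr c d m : sum_f_R0 (fun k => c k * rsum (m - k)%nat d) m = rsum m (conv c d).
Proof.
  induction m.
  - simpl. ring.
  - rewrite tech5. rewrite rsum_S, <- IHm. unfold conv.
    rewrite Nat.sub_diag. change (rsum 0 d) with 0. rewrite Rmult_0_r, Rplus_0_r.
    rewrite <- sum_plus. apply sum_eq. intros i Hi.
    replace (S m - i)%nat with (S (m - i)) by lia. rewrite rsum_S. ring.
Qed.

Lemma conv_delta_l d m : conv (fun t => if Nat.eqb t 0 then 1 else 0) d m = d m.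
Proof.
  unfold conv. destruct m.
  - simpl. ring.
  - rewrite decomp_sum by lia. simpl.
    rewrite sum_eq_R0. ring. intros. simpl. ring.
Qed.

Lemma conv_delta_r c m : conv c (fun t => if Nat.eqb t 0 then 1 else 0) m = c m.
Proof.
  unfold conv. destruct m.
  - simpl. ring.
  - rewrite tech5. rewrite Nat.sub_diag.
    rewrite sum_eq_R0; [simpl; ring|]. intros n Hn. replace (Nat.eqb (S m - n) 0) with false.
    ring. symmetry. apply Nat.eqb_neq. lia.
Qed.

Lemma cW_zero L : (forall w, In w L -> H1 w /\ w <> []) -> cW L 0 = 0.
Proof.
  induction L as [|w L IH]; intros H; [reflexivity|].
  rewrite cW_cons, IH by (intros; apply H; simpl; auto).
  rewrite cw_zero by (apply H; simpl; auto). ring.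
Qed.

Lemma cW_single w m : cW [w] m = cw w m.
Proof. unfold cW. simpl. ring. Qed.

Lemma snoc_decomp (l : list bool) : l <> [] -> exists l' a, l = l' ++ [a].
Proof.
  intros H. destruct (exists_last H) as [l' [a E]]. exists l', a. auto.
Qed.

Lemma cW_shuffle_aux N : forall u v, (length u + length v <= N)%nat -> H1 u -> H1 v ->
  forall m, cW (shuffle u v) m = conv (cw u) (cw v) m.
Proof.
  induction N as [|N IH]; intros u v Hl Hu Hv m.
  - destruct u; [|simpl in Hl; lia]. destruct v; [|simpl in Hl; lia].
    simpl. rewrite cW_single. unfold cw. simpl word_index. rewrite conv_delta_l. reflexivity.
  - destruct u as [|x u0] eqn:Eu.
    { rewrite shuffle_nil_l, cW_single. unfold cw at 2. simpl word_index.
      rewrite conv_delta_l. reflexivity. }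
    rewrite <- Eu in *.
    destruct v as [|y v0] eqn:Ev.
    { rewrite shuffle_nil_r, cW_single. unfold cw at 3. simpl word_index.
      rewrite conv_delta_r. reflexivity. }
    rewrite <- Ev in *.
    assert (Hun : u <> []) by (rewrite Eu; discriminate).
    assert (Hvn : v <> []) by (rewrite Ev; discriminate).
    destruct (snoc_decomp u Hun) as [u' [a Eua]].
    destruct (snoc_decomp v Hvn) as [v' [b Evb]].
    clear x u0 Eu y v0 Ev.
    assert (Hu' : H1 u') by (apply (H1_prefix u' a); rewrite <- Eua; auto).
    assert (Hv' : H1 v') by (apply (H1_prefix v' b); rewrite <- Evb; auto).
    assert (Lu : length u = S (length u')) by (rewrite Eua, length_app; simpl; lia).
    assert (Lv : length v = S (length v')) by (rewrite Evb, length_app; simpl; lia).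
    assert (Hall : forall u1 v1, H1 u1 -> H1 v1 -> (u1 <> [] \/ v1 <> []) ->
              forall w, In w (shuffle u1 v1) -> H1 w /\ w <> []).
    { intros u1 v1 Hu1 Hv1 Hne w Hw. destruct (shuffle_props _ _ _ Hw) as [Hlen Hh].
      split; auto. intros ->. simpl in Hlen.
      destruct Hne as [Hne|Hne]; [destruct u1|destruct v1]; try contradiction; simpl in Hlen; lia. }
    destruct m as [|m].
    + rewrite cW_zero by (apply Hall; auto).
      unfold conv. simpl. rewrite (cw_zero u) by auto. ring.
    + assert (Hm : 0 < INR (S m)) by (apply lt_0_INR; lia).
      apply Rmult_eq_reg_r with (INR (S m)); [|lra].
      assert (E1 : cW (shuffle u v) (S m) = cW (shuffle (u' ++ [a]) (v' ++ [b])) (S m)) by (rewrite Eua, Evb; reflexivity).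
      rewrite E1, (cW_perm _ _ _ (shuffle_back u' v' a b)), cW_app.
      rewrite <- Eua, <- Evb.
      rewrite Rmult_plus_distr_r.
      rewrite cW_map_snoc, cW_map_snoc.
      2:{ intros w Hw. assert (Hw' := Hall u v' Hu Hv' (or_introl Hun) w Hw).
          split; [tauto|]. apply H1_snoc; tauto. }
      2:{ intros w Hw. assert (Hw' := Hall u' v Hu' Hv (or_intror Hvn) w Hw).
          split; [tauto|]. apply H1_snoc; tauto. }
      assert (IH1 : forall t, cW (shuffle u' v) t = conv (cw u') (cw v) t)
        by (intros; apply IH; auto; lia).
      assert (IH2 : forall t, cW (shuffle u v') t = conv (cw u) (cw v') t)
        by (intros; apply IH; auto; lia).
      assert (ED1 : Dop a (cW (shuffle u' v)) (S m) = Dop a (conv (cw u') (cw v)) (S m)).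
      { destruct a; unfold Dop; [apply rsum_ext; intros; apply IH1|apply IH1]. }
      assert (ED2 : Dop b (cW (shuffle u v')) (S m) = Dop b (conv (cw u) (cw v')) (S m)).
      { destruct b; unfold Dop; [apply rsum_ext; intros; apply IH2|apply IH2]. }
      rewrite ED1, ED2.
      assert (Ku : forall k, cw u k * INR k = Dop a (cw u') k).
      { intros k. rewrite Eua. apply cw_snoc; auto. rewrite <- Eua; auto. }
      assert (Kv : forall k, cw v k * INR k = Dop b (cw v') k).
      { intros k. rewrite Evb. apply cw_snoc; auto. rewrite <- Evb; auto. }
      assert (CL : sum_f_R0 (fun k => Dop a (cw u') k * cw v (S m - k)%nat) (S m) = Dop a (conv (cw u') (cw v)) (S m)).
      { destruct a; unfold Dop; [apply conv_Dl|reflexivity]. }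
      assert (CR : sum_f_R0 (fun k => cw u k * Dop b (cw v') (S m - k)%nat) (S m) = Dop b (conv (cw u) (cw v')) (S m)).
      { destruct b; unfold Dop; [apply conv_Dr|reflexivity]. }
      rewrite <- CL, <- CR. unfold conv. rewrite (Rmult_comm _ (INR (S m))), scal_sum, <- sum_plus.
      apply sum_eq. intros k Hk.
      rewrite <- Ku, <- Kv. rewrite minus_INR by lia. ring.
Qed.

Lemma cW_shuffle u v m : H1 u -> H1 v -> cW (shuffle u v) m = conv (cw u) (cw v) m.
Proof. intros. apply (cW_shuffle_aux (length u + length v)); auto. Qed.


Lemma rsum_le_fun n F G : (forall t, (t < n)%nat -> F t <= G t) -> rsum n F <= rsum n G.
Proof.
  induction n; intros H; simpl; [lra|].
  assert (rsum n F <= rsum n G) by (apply IHn; intros; apply H; lia).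
  assert (F n <= G n) by (apply H; lia). lra.
Qed.

Lemma Ainner_nonneg k m : 0 <= Ainner k m.
Proof.
  revert m. induction k as [|p k IH] using rev_ind; intros m.
  - change (Ainner [] m) with 1. lra.
  - rewrite Ainner_snoc. unfold astep. induction m; simpl; [lra|].
    destruct (Nat.eqb m 0) eqn:E; [lra|].
    apply Nat.eqb_neq in E.
    assert (0 < INR m) by (apply lt_0_INR; lia).
    assert (0 < INR m ^ p) by (apply pow_lt; lra).
    assert (0 <= Ainner k m / INR m ^ p) by (apply Rdiv_le_0_compat; auto).
    lra.
Qed.

Lemma sqrt_ge1 m : (1 <= m)%nat -> 1 <= sqrt (INR m).
Proof.
  intros H. rewrite <- sqrt_1. apply sqrt_le_1_alt. apply (le_INR 1). auto.
Qed.

Lemma sum_inv_sqrt m :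
  rsum (S m) (fun t => if Nat.eqb t 0 then 0 else / sqrt (INR t)) <= 2 * sqrt (INR m).
Proof.
  induction m.
  - simpl. rewrite sqrt_0. lra.
  - rewrite rsum_S. simpl Nat.eqb. cbv iota.
    set (a := sqrt (INR (S m))). set (b := sqrt (INR m)).
    assert (Hb : 0 <= b) by apply sqrt_pos.
    assert (Ha : 0 < a) by (apply sqrt_INR_pos; lia).
    assert (Ea : a * a = b * b + 1).
    { unfold a, b. rewrite !sqrt_sqrt by (try apply pos_INR). rewrite S_INR. ring. }
    assert (Hab : b <= a) by nra.
    assert (/ a <= 2 * (a - b)).
    { apply Rmult_le_reg_r with a; auto. rewrite Rinv_l by lra.
      nra. }
    fold b in IHm. lra.
Qed.

Lemma sum_inv_sqrt' m : (1 <= m)%nat ->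
  rsum m (fun t => if Nat.eqb t 0 then 0 else / sqrt (INR t)) <= 2 * sqrt (INR m).
Proof.
  intros H. destruct m; [lia|]. eapply Rle_trans; [apply sum_inv_sqrt|].
  assert (sqrt (INR m) <= sqrt (INR (S m))) by (apply sqrt_le_1_alt; apply le_INR; lia). lra.
Qed.

Lemma pow_ge_self x p : 1 <= x -> (1 <= p)%nat -> x <= x ^ p.
Proof.
  intros Hx Hp. induction p; [lia|]. destruct p.
  - simpl. lra.
  - assert (x <= x ^ S p) by (apply IHp; lia). simpl in *. nra.
Qed.

Lemma Ainner_bound k : List.Forall (fun k => (1 <= k)%nat) k ->
  forall m, (1 <= m)%nat -> Ainner k m <= 2 ^ length k * sqrt (INR m).
Proof.
  induction k as [|p k IH] using rev_ind; intros Hk m Hm.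
  - change (Ainner [] m) with 1. simpl. assert (H := sqrt_ge1 m Hm). lra.
  - apply Forall_app in Hk. destruct Hk as [Hk Hp]. inversion Hp; subst.
    rewrite Ainner_snoc. unfold astep. rewrite length_app. simpl length.
    rewrite Nat.add_1_r. simpl pow.
    eapply Rle_trans.
    { apply rsum_le_fun with (G := fun t => 2 ^ length k * (if Nat.eqb t 0 then 0 else / sqrt (INR t))).
      intros t Ht. destruct (Nat.eqb t 0) eqn:E; [lra|].
      apply Nat.eqb_neq in E.
      assert (Ht1 : 1 <= INR t) by (apply (le_INR 1); lia).
      assert (Hs := sqrt_INR_pos t ltac:(lia)).
      assert (Htp : INR t <= INR t ^ p) by (apply pow_ge_self; auto).
      assert (HA := IH Hk t ltac:(lia)).
      assert (HA0 := Ainner_nonneg k t).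
      unfold Rdiv. apply Rle_trans with (2 ^ length k * sqrt (INR t) * / INR t).
      - apply Rmult_le_compat; auto. apply Rlt_le, Rinv_0_lt_compat. lra.
        apply Rinv_le_contravar; lra.
      - assert (E2 : sqrt (INR t) * / INR t = / sqrt (INR t)).
        { rewrite <- (sqrt_sqrt (INR t)) at 2 by lra. field. lra. }
        rewrite Rmult_assoc, E2. lra. }
    rewrite rsum_scal. assert (H := sum_inv_sqrt' m Hm).
    assert (0 < 2 ^ length k) by (apply pow_lt; lra). nra.
Qed.

Lemma Ainner_step k p m : (1 <= m)%nat ->
  Ainner (k ++ [p]) (S m) - Ainner (k ++ [p]) m = Ainner k m / INR m ^ p.
Proof.
  intros H. rewrite Ainner_snoc. unfold astep. rewrite rsum_S.
  destruct (Nat.eqb m 0) eqn:E; [apply Nat.eqb_eq in E; lia|]. ring.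
Qed.

Lemma Ainner_diff_bound k : List.Forall (fun k => (1 <= k)%nat) k ->
  forall m, (1 <= m)%nat ->
  0 <= Ainner k (S m) - Ainner k m <= 2 ^ length k / sqrt (INR m).
Proof.
  intros Hk m Hm. assert (Hs := sqrt_INR_pos m Hm).
  destruct k as [|p0 k0] using rev_ind.
  - change (Ainner [] (S m)) with 1. change (Ainner [] m) with 1.
    simpl. split; [lra|]. unfold Rdiv. rewrite Rmult_1_l.
    assert (0 < / sqrt (INR m)) by (apply Rinv_0_lt_compat; auto). lra.
  - clear IHk0. apply Forall_app in Hk. destruct Hk as [Hk Hp]. inversion Hp; subst.
    rewrite Ainner_step by auto.
    assert (Hx1 : 1 <= INR m) by (apply (le_INR 1); lia).
    assert (Hxp : INR m <= INR m ^ p0) by (apply pow_ge_self; auto).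
    assert (HA := Ainner_bound k0 Hk m Hm).
    assert (HA0 := Ainner_nonneg k0 m).
    split.
    + apply Rdiv_le_0_compat; auto. lra.
    + rewrite length_app. simpl length. rewrite Nat.add_1_r. simpl pow.
      assert (0 < 2 ^ length k0) by (apply pow_lt; lra).
      unfold Rdiv. apply Rle_trans with (2 ^ length k0 * sqrt (INR m) * / INR m).
      * apply Rmult_le_compat; auto. apply Rlt_le, Rinv_0_lt_compat. lra.
        apply Rinv_le_contravar; lra.
      * assert (E2 : sqrt (INR m) * / INR m = / sqrt (INR m)).
        { rewrite <- (sqrt_sqrt (INR m)) at 2 by lra. field. lra. }
        rewrite Rmult_assoc, E2.
        assert (0 < / sqrt (INR m)) by (apply Rinv_0_lt_compat; auto). nra.
Qed.

Lemma pow_diff x y p : 0 <= y -> y <= x -> x <= 1 -> x ^ p - y ^ p <= INR p * (x - y).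
Proof.
  intros Hy Hyx Hx. induction p.
  - simpl. lra.
  - rewrite S_INR. simpl.
    assert (0 <= y ^ p) by (apply pow_le; auto).
    assert (y ^ p <= 1) by (apply pow_le_one; lra).
    assert (x * x ^ p - y * y ^ p = x * (x ^ p - y ^ p) + (x - y) * y ^ p) by ring.
    assert (0 <= x ^ p - y ^ p).
    { clear -Hy Hyx. induction p; simpl; [lra|]. assert (0 <= y ^ p) by (apply pow_le; auto).
      assert (y ^ p <= x ^ p) by lra. nra. }
    nra.
Qed.

Lemma inv32 m : (1 <= m)%nat ->
  / (INR m * sqrt (INR m)) <= 4 * (/ sqrt (INR m) - / sqrt (INR (S m))).
Proof.
  intros Hm.
  set (s := sqrt (INR m)). set (s' := sqrt (INR (S m))).
  assert (Hs1 : 1 <= s) by (apply sqrt_ge1; auto).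
  assert (Hs' : 0 < s') by (apply sqrt_INR_pos; lia).
  assert (Es : s * s = INR m) by (unfold s; apply sqrt_sqrt, pos_INR).
  assert (Es' : s' * s' = INR m + 1) by (unfold s'; rewrite sqrt_sqrt by apply pos_INR; apply S_INR).
  assert (Hss : s <= s') by nra.
  assert (Hs'2 : s' <= 2 * s) by nra.
  rewrite <- Es.
  assert (E : 4 * (/ s - / s') = 4 * (s' - s) / (s * s')) by (field; lra).
  rewrite E.
  assert (E2 : s' - s = / (s' + s)) by (field_simplify_eq; [nra|lra]).
  rewrite E2.
  replace (4 * / (s' + s) / (s * s')) with (4 / ((s' + s) * (s * s'))) by (field; lra).
  replace (/ (s * s * s)) with (1 / (s * s * s)) by (field; lra).
  apply Rmult_le_reg_r with ((s' + s) * (s * s') * (s * s * s)).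
  { apply Rmult_lt_0_compat; [|nra]. apply Rmult_lt_0_compat; nra. }
  unfold Rdiv. 
  replace (1 * / (s * s * s) * ((s' + s) * (s * s') * (s * s * s))) with ((s' + s) * (s * s')) by (field; lra).
  replace (4 * / ((s' + s) * (s * s')) * ((s' + s) * (s * s') * (s * s * s))) with (4 * (s * s * s)) by (field; nra).
  nra.
Qed.

Lemma Good_cidx k : List.Forall (fun k => (1 <= k)%nat) k -> exists C, Good (cidx k) C.
Proof.
  intros Hk. destruct k as [|p k'] using rev_ind.
  - exists 0. intros m Hm. simpl.
    destruct m; [lia|]. simpl Nat.eqb. cbv iota.
    rewrite Rminus_0_r, Rabs_R0. unfold Rdiv. split; lra.
  - clear IHk'. apply Forall_app in Hk. destruct Hk as [Hk Hp]. inversion Hp; subst.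
    set (d := length k').
    exists (4 * (INR p + 1) * 2 ^ d).
    assert (Hd : 0 < 2 ^ d) by (apply pow_lt; lra).
    assert (Hp1 : 1 <= INR p) by (apply (le_INR 1); auto).
    intros m Hm.
    assert (Hkn : k' ++ [p] <> []) by (intros E; destruct k'; discriminate).
    rewrite !cidx_nonnil by auto. rewrite !removelast_last, !last_last.
    set (x := INR m).
    assert (Hx1 : 1 <= x) by (apply (le_INR 1); auto).
    assert (Ex1 : INR (S m) = x + 1) by apply S_INR.
    rewrite Ex1.
    set (s := sqrt x).
    assert (Hs1 : 1 <= s) by (apply sqrt_ge1; auto).
    assert (Es : s * s = x) by (unfold s; apply sqrt_sqrt; lra).
    set (A := Ainner k' m). set (A1 := Ainner k' (S m)).
    assert (HA0 : 0 <= A) by apply Ainner_nonneg.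
    assert (HA : A <= 2 ^ d * s) by (apply Ainner_bound; auto).
    assert (Hdelta := Ainner_diff_bound k' Hk m Hm). fold A A1 d x s in Hdelta.
    set (u := / x ^ p). set (v := / (x + 1) ^ p).
    assert (Hxp : x <= x ^ p) by (apply pow_ge_self; auto).
    assert (Hxp1 : x + 1 <= (x + 1) ^ p) by (apply pow_ge_self; lra || auto).
    assert (Hv0 : 0 <= v) by (apply Rlt_le, Rinv_0_lt_compat; lra).
    assert (Hv1 : v <= / (x + 1)) by (apply Rinv_le_contravar; lra).
    assert (Hu1 : u <= / x) by (apply Rinv_le_contravar; lra).
    assert (Huv : u - v <= INR p * (/ x - / (x + 1))).
    { unfold u, v. rewrite <- !pow_inv. apply pow_diff.
      - apply Rlt_le, Rinv_0_lt_compat; lra.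
      - apply Rinv_le_contravar; lra.
      - rewrite <- Rinv_1. apply Rinv_le_contravar; lra. }
    assert (Hvu : v <= u).
    { unfold u, v. apply Rinv_le_contravar. apply pow_lt; lra. apply pow_incr; lra. }
    assert (Hxs : 0 < x * s) by nra.
    assert (I32 := inv32 m Hm). fold x s in I32.
    rewrite Ex1 in I32.
    unfold Rdiv. fold u v. split.
    + rewrite Rabs_pos_eq by (apply Rmult_le_pos; auto; apply Rlt_le, Rinv_0_lt_compat; apply pow_lt; lra).
      apply Rle_trans with (2 ^ d * s * / x).
      * apply Rmult_le_compat; auto. apply Rlt_le, Rinv_0_lt_compat; apply pow_lt; lra.
      * replace (2 ^ d * s * / x) with (2 ^ d * / s) by (rewrite <- Es; field; lra).
        assert (0 < / s) by (apply Rinv_0_lt_compat; lra).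
        assert (2 ^ d <= 4 * (INR p + 1) * 2 ^ d) by nra.
        fold s. nra.
    + replace (A * u - A1 * v) with (A * (u - v) - (A1 - A) * v) by ring.
      eapply Rle_trans; [apply Rabs_triang|]. rewrite Rabs_Ropp.
      rewrite (Rabs_pos_eq (A * (u - v))) by (apply Rmult_le_pos; lra).
      rewrite (Rabs_pos_eq ((A1 - A) * v)) by (apply Rmult_le_pos; lra).
      assert (B1 : A * (u - v) <= 2 ^ d * INR p * / (x * s)).
      { apply Rle_trans with (2 ^ d * s * (INR p * (/ x - / (x + 1)))).
        apply Rmult_le_compat; lra.
        replace (/ x - / (x + 1)) with (/ (x * (x + 1))) by (field; lra).
        replace (2 ^ d * INR p * / (x * s)) with (2 ^ d * INR p * s * / (x * x)) by (rewrite <- Es at 2; field; lra).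
        replace (2 ^ d * s * (INR p * / (x * (x + 1)))) with (2 ^ d * INR p * s * / (x * (x + 1))) by ring.
        apply Rmult_le_compat_l; [nra|]. apply Rinv_le_contravar; nra. }
      assert (B2 : (A1 - A) * v <= 2 ^ d * / (x * s)).
      { apply Rle_trans with (2 ^ d / s * / (x + 1)).
        apply Rmult_le_compat; lra.
        unfold Rdiv. rewrite Rmult_assoc. apply Rmult_le_compat_l; [lra|].
        rewrite <- Rinv_mult. apply Rinv_le_contravar; nra. }
      assert (0 <= / (x * s)) by (apply Rlt_le, Rinv_0_lt_compat; lra).
      apply Rle_trans with (2 ^ d * (INR p + 1) * / (x * s)); [nra|].
      replace (4 * (INR p + 1) * 2 ^ d * (/ s - / sqrt (x + 1))) with
        (2 ^ d * (INR p + 1) * (4 * (/ s - / sqrt (x + 1)))) by ring.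
      apply Rmult_le_compat_l; [nra|]. exact I32.
Qed.

Lemma Good_cw w : exists C, Good (cw w) C.
Proof. apply Good_cidx, word_index_pos. Qed.

Lemma Good_plus c d C D : Good c C -> Good d D -> Good (fun m => c m + d m) (C + D).
Proof.
  intros H1 H2 m Hm. destruct (H1 m Hm) as [A1 B1]. destruct (H2 m Hm) as [A2 B2].
  split.
  - eapply Rle_trans; [apply Rabs_triang|]. unfold Rdiv in *. lra.
  - replace (c m + d m - (c (S m) + d (S m))) with ((c m - c (S m)) + (d m - d (S m))) by ring.
    eapply Rle_trans; [apply Rabs_triang|]. lra.
Qed.

Lemma Good_cW W : exists C, Good (cW W) C.
Proof.
  induction W as [|w W [C IH]].
  - exists 0. intros m Hm. unfold cW. simpl. rewrite Rminus_0_r, Rabs_R0. unfold Rdiv. lra.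
  - destruct (Good_cw w) as [D Hw]. exists (D + C).
    apply (Good_plus (cw w) (cW W)); auto.
Qed.

Lemma Good_bounded c C : Good c C -> forall m, Rabs (c m) <= C + Rabs (c 0%nat).
Proof.
  intros H m. assert (C0 := Good_C c C H). destruct m.
  - lra.
  - destruct (H (S m) ltac:(lia)) as [H1 _].
    assert (1 <= sqrt (INR (S m))) by (apply sqrt_ge1; lia).
    assert (C / sqrt (INR (S m)) <= C).
    { unfold Rdiv. assert (0 < / sqrt (INR (S m)) <= 1).
      { split. apply Rinv_0_lt_compat; lra. rewrite <- Rinv_1. apply Rinv_le_contravar; lra. }
      nra. }
    assert (0 <= Rabs (c 0%nat)) by apply Rabs_pos. lra.
Qed.


Lemma is_derive_pairC (f : R -> C) x (a b : R) :
  is_derive (fun t => fst (f t)) x a -> is_derive (fun t => snd (f t)) x b ->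
  is_derive f x ((a, b) : C).
Proof.
  intros H1 H2.
  assert (H := filterdiff_comp'_2 (fun t => fst (f t)) (fun t => snd (f t))
                 (fun u v => (u, v) : C) x (fun y => scal y a) (fun y => scal y b)
                 (fun u v => (u, v) : C) H1 H2).
  unfold is_derive.
  eapply filterdiff_ext; [|eapply filterdiff_ext_lin; [apply H|]].
  - intros t. simpl. destruct (f t); reflexivity.
  - apply filterdiff_linear. split.
    + intros u v. reflexivity.
    + intros k u. reflexivity.
    + exists 1. split; [lra|]. intros u. simpl. right.
      destruct u as [u1 u2]. unfold norm. simpl. unfold prod_norm. simpl. ring.
  - intros y. reflexivity.
Qed.

Lemma is_derive_fstC (f : R -> C) x (l : C) :
  is_derive f x l -> is_derive (fun t => fst (f t)) x (fst l).
Proof.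
  intros H. unfold is_derive in *.
  eapply filterdiff_ext_lin.
  - apply (filterdiff_comp' f (fun p : prod_NormedModule R_AbsRing R_NormedModule R_NormedModule => fst p) x _ (fun p : prod_NormedModule R_AbsRing R_NormedModule R_NormedModule => fst p) H).
    apply filterdiff_linear. apply is_linear_fst.
  - intros y. reflexivity.
Qed.

Lemma is_derive_sndC (f : R -> C) x (l : C) :
  is_derive f x l -> is_derive (fun t => snd (f t)) x (snd l).
Proof.
  intros H. unfold is_derive in *.
  eapply filterdiff_ext_lin.
  - apply (filterdiff_comp' f (fun p : prod_NormedModule R_AbsRing R_NormedModule R_NormedModule => snd p) x _ (fun p : prod_NormedModule R_AbsRing R_NormedModule R_NormedModule => snd p) H).
    apply filterdiff_linear. apply is_linear_snd.
  - intros y. reflexivity.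
Qed.

Lemma is_derive_C (f : R -> C) x (l : C) :
  is_derive (fun t => fst (f t)) x (fst l) -> is_derive (fun t => snd (f t)) x (snd l) ->
  is_derive f x l.
Proof. intros H1 H2. destruct l as [a b]. apply is_derive_pairC; auto. Qed.

Lemma is_derive_val {V : NormedModule R_AbsRing} (f : R -> V) x l l' :
  is_derive f x l -> l = l' -> is_derive f x l'.
Proof. intros H <-. exact H. Qed.

Lemma is_derive_valC (f : R -> C) (x : R) (l l' : C) :
  is_derive f x l -> l = l' -> is_derive f x l'.
Proof. intros H <-. exact H. Qed.

Lemma is_derive_Rmult (f g : R -> R) x a b :
  is_derive f x a -> is_derive g x b -> is_derive (fun t => f t * g t) x (a * g x + f x * b).
Proof.
  intros Hf Hg. apply (is_derive_mult f g x a b Hf Hg Rmult_comm).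
Qed.

Lemma is_derive_Rminus (f g : R -> R) x a b :
  is_derive f x a -> is_derive g x b -> is_derive (fun t => f t - g t) x (a - b).
Proof. intros Hf Hg. apply (is_derive_minus f g x a b Hf Hg). Qed.

Lemma is_derive_Rplus (f g : R -> R) x a b :
  is_derive f x a -> is_derive g x b -> is_derive (fun t => f t + g t) x (a + b).
Proof. intros Hf Hg. apply (is_derive_plus f g x a b Hf Hg). Qed.

Lemma is_derive_Cmult (f g : R -> C) x (a b : C) :
  is_derive f x a -> is_derive g x b ->
  is_derive (fun t => Cmult (f t) (g t)) x (Cplus (Cmult a (g x)) (Cmult (f x) b)).
Proof.
  intros Hf Hg.
  assert (F1 := is_derive_fstC _ _ _ Hf). assert (F2 := is_derive_sndC _ _ _ Hf).
  assert (G1 := is_derive_fstC _ _ _ Hg). assert (G2 := is_derive_sndC _ _ _ Hg).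
  apply is_derive_C.
  - eapply is_derive_ext with (f := fun t => fst (f t) * fst (g t) - snd (f t) * snd (g t)).
    { intros t. destruct (f t), (g t). reflexivity. }
    eapply is_derive_val.
    { apply is_derive_Rminus; apply is_derive_Rmult; eauto. }
    destruct a, b, (f x), (g x). simpl. ring.
  - eapply is_derive_ext with (f := fun t => fst (f t) * snd (g t) + snd (f t) * fst (g t)).
    { intros t. destruct (f t), (g t). reflexivity. }
    eapply is_derive_val.
    { apply is_derive_Rplus; apply is_derive_Rmult; eauto. }
    destruct a, b, (f x), (g x). simpl. ring.
Qed.

Lemma is_derive_Cplus (f g : R -> C) x (a b : C) :
  is_derive f x a -> is_derive g x b ->
  is_derive (fun t => Cplus (f t) (g t)) x (Cplus a b).
Proof.
  intros Hf Hg.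
  assert (F1 := is_derive_fstC _ _ _ Hf). assert (F2 := is_derive_sndC _ _ _ Hf).
  assert (G1 := is_derive_fstC _ _ _ Hg). assert (G2 := is_derive_sndC _ _ _ Hg).
  apply is_derive_C.
  - eapply is_derive_ext with (f := fun t => fst (f t) + fst (g t)).
    { intros t. destruct (f t), (g t). reflexivity. }
    eapply is_derive_val. { apply is_derive_Rplus; eauto. }
    destruct a, b. reflexivity.
  - eapply is_derive_ext with (f := fun t => snd (f t) + snd (g t)).
    { intros t. destruct (f t), (g t). reflexivity. }
    eapply is_derive_val. { apply is_derive_Rplus; eauto. }
    destruct a, b. reflexivity.
Qed.

Lemma is_derive_Cconst (c : C) (x : R) : is_derive (fun _ : R => c) x (RtoC 0).
Proof.
  apply is_derive_C; simpl; (eapply is_derive_val; [apply is_derive_const|reflexivity]).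
Qed.

Lemma is_derive_Csum {A : Type} (F : A -> R -> C) (F' : A -> C) (l : list A) x :
  (forall a, In a l -> is_derive (F a) x (F' a)) ->
  is_derive (fun t => Csum (map (fun a => F a t) l)) x (Csum (map F' l)).
Proof.
  induction l as [|a l IH]; intros H.
  - simpl. apply is_derive_Cconst.
  - simpl. apply is_derive_Cplus; [apply H; simpl; auto|apply IH; intros; apply H; simpl; auto].
Qed.

Lemma is_derive_Cscal (c : C) (f : R -> C) (x : R) (a : C) :
  is_derive f x a -> is_derive (fun t => Cmult c (f t)) x (Cmult c a).
Proof.
  intros H. eapply is_derive_valC.
  { apply is_derive_Cmult; [apply is_derive_Cconst|exact H]. }
  cbv beta. ring.
Qed.

Lemma is_derive_ipow k x :
  is_derive (fun t => Cpow (Cmult Ci (RtoC t)) k) x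
    (Cmult (RtoC (INR k)) (Cmult Ci (Cpow (Cmult Ci (RtoC x)) (k - 1)))).
Proof.
  assert (Hlin : is_derive (fun t => Cmult Ci (RtoC t)) x Ci).
  { assert (Hr : is_derive (fun t : R => RtoC t) x (RtoC 1)).
    { apply is_derive_C; simpl.
      - eapply is_derive_val; [apply is_derive_id|]. reflexivity.
      - eapply is_derive_val; [apply is_derive_const|]. reflexivity. }
    eapply is_derive_valC; [apply (is_derive_Cscal Ci _ x _ Hr)|]. ring. }
  induction k.
  - simpl. eapply is_derive_valC; [apply is_derive_Cconst|]. simpl. ring.
  - simpl Cpow. eapply is_derive_valC; [apply is_derive_Cmult; [exact Hlin|exact IHk]|].
    rewrite S_INR. destruct k.
    + simpl. rewrite Rplus_0_l. ring.
    + replace (S (S k) - 1)%nat with (S k) by lia. replace (S k - 1)%nat with k by lia.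
      simpl Cpow. rewrite RtoC_plus. ring.
Qed.


Lemma Cpow_eis s n : Cpow (eis s) n = eis (INR n * s).
Proof.
  induction n.
  - simpl. unfold eis. rewrite Rmult_0_l, cos_0, sin_0. reflexivity.
  - rewrite Cpow_S, IHn. unfold eis, Cmult. simpl fst. simpl snd.
    rewrite S_INR. replace ((INR n + 1) * s) with (s + INR n * s) by ring.
    rewrite cos_plus, sin_plus. f_equal; ring.
Qed.

Definition RS (c : nat -> R) (s : R) : R := Series (fun m => c m * cos (INR m * s)).
Definition IS (c : nat -> R) (s : R) : R := Series (fun m => c m * sin (INR m * s)).
Definition Rt (c : nat -> R) (s t : R) : R := Series (fun m => c m * t ^ m * cos (INR m * s)).
Definition It (c : nat -> R) (s t : R) : R := Series (fun m => c m * t ^ m * sin (INR m * s)).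

Lemma sin_half_pos s : 0 < s < 2 * PI -> 0 < sin (s / 2).
Proof. intros H. apply sin_gt_0; lra. Qed.

Lemma cos_tail' s : 0 < s < 2 * PI -> forall p k, (p <= k)%nat ->
  Rabs (rsum k (fun m => cos (INR m * s)) - rsum p (fun m => cos (INR m * s))) <= / sin (s / 2).
Proof. intros. apply cos_tail; auto. apply sin_half_pos; auto. Qed.

Lemma sin_tail' s : 0 < s < 2 * PI -> forall p k, (p <= k)%nat ->
  Rabs (rsum k (fun m => sin (INR m * s)) - rsum p (fun m => sin (INR m * s))) <= / sin (s / 2).
Proof. intros. apply sin_tail; auto. apply sin_half_pos; auto. Qed.

Lemma RS_series c C s : Good c C -> 0 < s < 2 * PI -> is_series (fun m => c m * cos (INR m * s)) (RS c s).
Proof. intros HG Hs. apply (good_series1 c _ C _ HG (cos_tail' s Hs)). Qed.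

Lemma IS_series c C s : Good c C -> 0 < s < 2 * PI -> is_series (fun m => c m * sin (INR m * s)) (IS c s).
Proof. intros HG Hs. apply (good_series1 c _ C _ HG (sin_tail' s Hs)). Qed.

Lemma Rt_series c C s t : Good c C -> 0 < s < 2 * PI -> 0 <= t <= 1 ->
  is_series (fun m => c m * t ^ m * cos (INR m * s)) (Rt c s t).
Proof. intros HG Hs Ht. apply (good_series c _ C _ t HG Ht (cos_tail' s Hs)). Qed.

Lemma It_series c C s t : Good c C -> 0 < s < 2 * PI -> 0 <= t <= 1 ->
  is_series (fun m => c m * t ^ m * sin (INR m * s)) (It c s t).
Proof. intros HG Hs Ht. apply (good_series c _ C _ t HG Ht (sin_tail' s Hs)). Qed.

Lemma Rt1 c s : Rt c s 1 = RS c s.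
Proof. apply Series_ext. intros. rewrite pow1. ring. Qed.
Lemma It1 c s : It c s 1 = IS c s.
Proof. apply Series_ext. intros. rewrite pow1. ring. Qed.

Lemma Series_zero : Series (fun _ => 0) = 0.
Proof.
  apply is_series_unique. apply is_series_rsum.
  eapply is_lim_seq_ext; [|apply is_lim_seq_const]. intros n. symmetry. apply rsum_zero.
Qed.

Lemma Series_delta a : (forall m, (1 <= m)%nat -> a m = 0) -> Series a = a 0%nat.
Proof.
  intros H. apply is_series_unique. apply is_series_rsum.
  apply is_lim_seq_incr_1.
  eapply is_lim_seq_ext; [|apply is_lim_seq_const]. intros n. symmetry.
  induction n. simpl. ring. rewrite rsum_S, IHn, (H (S n)) by lia. ring.
Qed.

Lemma Li_word w s : 0 < s < 2 * PI ->
  Li (word_index w) (eis s) = (RS (cw w) s, IS (cw w) s).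
Proof.
  intros Hs. unfold RS, IS, cw.
  assert (Hpos := word_index_pos w).
  destruct (word_index w) as [|k0 k1] eqn:E.
  - simpl. rewrite !Series_delta by (intros [|m] Hm; [lia|simpl; ring]).
    simpl. rewrite Rmult_0_l, cos_0, sin_0. unfold RtoC. f_equal; ring.
  - assert (Hz : cidx (k0 :: k1) 0 = 0) by (apply cidx_zero; auto; discriminate).
    rewrite (Series_incr_1_aux (fun m => cidx (k0::k1) m * cos (INR m * s))) by (rewrite Hz; ring).
    rewrite (Series_incr_1_aux (fun m => cidx (k0::k1) m * sin (INR m * s))) by (rewrite Hz; ring).
    unfold Li, Cseries. f_equal; apply Series_ext; intros m; rewrite Cpow_eis; change (cidx (k0 :: k1) (S m)) with (Ainner (removelast (k0::k1)) (S m) / INR (S m) ^ last (k0::k1) 0%nat); unfold Cmult, RtoC, eis; cbn [fst snd]; rewrite Rmult_0_l; [rewrite Rminus_0_r|rewrite Rplus_0_r]; reflexivity.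
Qed.

Definition Lval (W : list (list bool)) (s : R) : C := Lmap W (eis s).

Lemma Lmap_eq W s : 0 < s < 2 * PI -> Lmap W (eis s) = (RS (cW W) s, IS (cW W) s).
Proof.
  intros Hs. induction W as [|w W IH].
  - change (Lmap [] (eis s)) with (RtoC 0). unfold RS, IS, cW; simpl.
    rewrite (Series_ext (fun m => 0 * cos (INR m * s)) (fun _ => 0)) by (intros; ring).
    rewrite (Series_ext (fun m => 0 * sin (INR m * s)) (fun _ => 0)) by (intros; ring).
    rewrite Series_zero. reflexivity.
  - change (Lmap (w :: W) (eis s)) with (Cplus (Li (word_index w) (eis s)) (Lmap W (eis s))).
    rewrite IH, Li_word by auto.
    destruct (Good_cw w) as [C1 H1]. destruct (Good_cW W) as [C2 H2].
    unfold RS, IS.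
    rewrite (Series_ext (fun m => cW (w :: W) m * cos (INR m * s)) (fun m => cw w m * cos (INR m * s) + cW W m * cos (INR m * s))) by (intros; rewrite cW_cons; ring).
    rewrite (Series_ext (fun m => cW (w :: W) m * sin (INR m * s))
               (fun m => cw w m * sin (INR m * s) + cW W m * sin (INR m * s))) by (intros; rewrite cW_cons; ring).
    rewrite !Series_plus.
    + reflexivity.
    + eexists; eapply IS_series; eauto.
    + eexists; eapply IS_series; eauto.
    + eexists; eapply RS_series; eauto.
    + eexists; eapply RS_series; eauto.
Qed.


Lemma abs_ex_series c C (e : nat -> R) t : Good c C -> 0 <= t < 1 -> (forall m, Rabs (e m) <= 1) ->
  ex_series (fun m => Rabs (c m * t ^ m * e m)).
Proof.
  intros HG Ht He.
  apply (@ex_series_le R_AbsRing R_CompleteNormedModule _ (fun m => (C + Rabs (c 0%nat)) * t ^ m)).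
  - intros m. change (norm (Rabs (c m * t ^ m * e m))) with (Rabs (Rabs (c m * t ^ m * e m))).
    rewrite Rabs_Rabsolu, !Rabs_mult.
    assert (H1 := Good_bounded c C HG m).
    assert (H2 := He m).
    rewrite (Rabs_pos_eq (t ^ m)) by (apply pow_le; lra).
    assert (0 <= t ^ m) by (apply pow_le; lra).
    assert (0 <= Rabs (c m)) by apply Rabs_pos. assert (0 <= Rabs (e m)) by apply Rabs_pos.
    assert (Rabs (c m) * t ^ m <= (C + Rabs (c 0%nat)) * t ^ m) by (apply Rmult_le_compat_r; auto).
    assert (0 <= Rabs (c m) * t ^ m) by (apply Rmult_le_pos; auto).
    assert (Rabs (c m) * t ^ m * Rabs (e m) <= Rabs (c m) * t ^ m * 1) by (apply Rmult_le_compat_l; auto).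
    lra.
  - apply (ex_series_scal_l (K:=R_AbsRing) (V:=R_NormedModule) (C + Rabs (c 0%nat)) (fun m => t ^ m)). apply ex_series_geom. rewrite Rabs_pos_eq; lra.
Qed.

Lemma conv_term c d t s n :
  sum_f_R0 (fun k => c k * t ^ k * cos (INR k * s) * (d (n - k)%nat * t ^ (n - k) * cos (INR (n - k) * s))) n
  - sum_f_R0 (fun k => c k * t ^ k * sin (INR k * s) * (d (n - k)%nat * t ^ (n - k) * sin (INR (n - k) * s))) n
  = conv c d n * t ^ n * cos (INR n * s).
Proof.
  rewrite <- minus_sum. unfold conv. rewrite Rmult_assoc, Rmult_comm, scal_sum.
  apply sum_eq. intros k Hk.
  replace (t ^ n) with (t ^ k * t ^ (n - k)) by (rewrite <- pow_add; f_equal; lia).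
  replace (INR n * s) with (INR k * s + INR (n - k) * s) by (rewrite minus_INR by lia; ring).
  rewrite cos_plus. ring.
Qed.

Lemma conv_term_sin c d t s n :
  sum_f_R0 (fun k => c k * t ^ k * cos (INR k * s) * (d (n - k)%nat * t ^ (n - k) * sin (INR (n - k) * s))) n
  + sum_f_R0 (fun k => c k * t ^ k * sin (INR k * s) * (d (n - k)%nat * t ^ (n - k) * cos (INR (n - k) * s))) n
  = conv c d n * t ^ n * sin (INR n * s).
Proof.
  rewrite <- sum_plus. unfold conv. rewrite Rmult_assoc, Rmult_comm, scal_sum.
  apply sum_eq. intros k Hk.
  replace (t ^ n) with (t ^ k * t ^ (n - k)) by (rewrite <- pow_add; f_equal; lia).
  replace (INR n * s) with (INR k * s + INR (n - k) * s) by (rewrite minus_INR by lia; ring).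
  rewrite sin_plus. ring.
Qed.

Lemma cauchy_t c d C D s t : Good c C -> Good d D -> 0 < s < 2 * PI -> 0 <= t < 1 ->
  Rt (conv c d) s t = Rt c s t * Rt d s t - It c s t * It d s t /\
  It (conv c d) s t = Rt c s t * It d s t + It c s t * Rt d s t.
Proof.
  intros Hc Hd Hs Ht.
  assert (Ht' : 0 <= t <= 1) by lra.
  assert (Rc := Rt_series c C s t Hc Hs Ht'). assert (Ic := It_series c C s t Hc Hs Ht').
  assert (Rd := Rt_series d D s t Hd Hs Ht'). assert (Id := It_series d D s t Hd Hs Ht').
  assert (ARc := abs_ex_series c C (fun m => cos (INR m * s)) t Hc Ht ltac:(intros; apply Rabs_le; apply COS_bound)).
  assert (AIc := abs_ex_series c C (fun m => sin (INR m * s)) t Hc Ht ltac:(intros; apply Rabs_le; apply SIN_bound)).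
  assert (ARd := abs_ex_series d D (fun m => cos (INR m * s)) t Hd Ht ltac:(intros; apply Rabs_le; apply COS_bound)).
  assert (AId := abs_ex_series d D (fun m => sin (INR m * s)) t Hd Ht ltac:(intros; apply Rabs_le; apply SIN_bound)).
  assert (M1 := is_series_mult _ _ _ _ Rc Rd ARc ARd).
  assert (M2 := is_series_mult _ _ _ _ Ic Id AIc AId).
  assert (M3 := is_series_mult _ _ _ _ Rc Id ARc AId).
  assert (M4 := is_series_mult _ _ _ _ Ic Rd AIc ARd).
  split.
  - apply is_series_unique. unfold Rt.
    assert (H := is_series_minus _ _ _ _ M1 M2).
    eapply is_series_ext; [|exact H].
    intros n. simpl. unfold plus, opp. simpl. rewrite <- conv_term. unfold Rminus. reflexivity.
  - apply is_series_unique. unfold It.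
    assert (H := is_series_plus _ _ _ _ M3 M4).
    eapply is_series_ext; [|exact H].
    intros n. simpl. unfold plus. simpl. rewrite <- conv_term_sin. reflexivity.
Qed.

Definition tseq (n : nat) : R := 1 - / INR (S n).

Lemma tseq_range n : 0 <= tseq n < 1.
Proof.
  unfold tseq. assert (1 <= INR (S n)) by (apply (le_INR 1); lia).
  assert (0 < / INR (S n)) by (apply Rinv_0_lt_compat; lra).
  assert (/ INR (S n) <= 1) by (rewrite <- Rinv_1; apply Rinv_le_contravar; lra). lra.
Qed.

Lemma tseq_lim : is_lim_seq tseq 1.
Proof.
  unfold tseq.
  assert (H := is_lim_seq_inv INR p_infty is_lim_seq_INR ltac:(discriminate)).
  simpl in H. apply is_lim_seq_incr_1 in H.
  assert (H0 := is_lim_seq_minus' _ _ 1 0 (is_lim_seq_const 1) H).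
  rewrite Rminus_0_r in H0. exact H0.
Qed.

Lemma Rt_lim c C s : Good c C -> 0 < s < 2 * PI -> is_lim_seq (fun n => Rt c s (tseq n)) (RS c s).
Proof.
  intros HG Hs. rewrite <- Rt1. unfold Rt.
  apply (good_abel c (fun m => cos (INR m * s)) C (/ sin (s / 2)) tseq HG (cos_tail' s Hs)).
  - intros n. assert (H := tseq_range n). lra.
  - apply tseq_lim.
Qed.

Lemma It_lim c C s : Good c C -> 0 < s < 2 * PI -> is_lim_seq (fun n => It c s (tseq n)) (IS c s).
Proof.
  intros HG Hs. rewrite <- It1. unfold It.
  apply (good_abel c (fun m => sin (INR m * s)) C (/ sin (s / 2)) tseq HG (sin_tail' s Hs)).
  - intros n. assert (H := tseq_range n). lra.
  - apply tseq_lim.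
Qed.

Lemma conv_value c d C D E s : Good c C -> Good d D -> Good (conv c d) E -> 0 < s < 2 * PI ->
  RS (conv c d) s = RS c s * RS d s - IS c s * IS d s /\
  IS (conv c d) s = RS c s * IS d s + IS c s * RS d s.
Proof.
  intros Hc Hd He Hs.
  assert (L1 := Rt_lim c C s Hc Hs). assert (L2 := It_lim c C s Hc Hs).
  assert (L3 := Rt_lim d D s Hd Hs). assert (L4 := It_lim d D s Hd Hs).
  assert (L5 := Rt_lim (conv c d) E s He Hs). assert (L6 := It_lim (conv c d) E s He Hs).
  split.
  - assert (L := is_lim_seq_minus' _ _ _ _ (is_lim_seq_mult' _ _ _ _ L1 L3) (is_lim_seq_mult' _ _ _ _ L2 L4)).
    assert (L' : is_lim_seq (fun n => Rt (conv c d) s (tseq n)) (RS c s * RS d s - IS c s * IS d s)).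
    { eapply is_lim_seq_ext; [|exact L]. intros n. symmetry. apply (cauchy_t c d C D s); auto. apply tseq_range. }
    apply is_lim_seq_unique in L5. apply is_lim_seq_unique in L'. rewrite L5 in L'. injection L'. auto.
  - assert (L := is_lim_seq_plus' _ _ _ _ (is_lim_seq_mult' _ _ _ _ L1 L4) (is_lim_seq_mult' _ _ _ _ L2 L3)).
    assert (L' : is_lim_seq (fun n => It (conv c d) s (tseq n)) (RS c s * IS d s + IS c s * RS d s)).
    { eapply is_lim_seq_ext; [|exact L]. intros n. symmetry. apply (cauchy_t c d C D s); auto. apply tseq_range. }
    apply is_lim_seq_unique in L6. apply is_lim_seq_unique in L'. rewrite L6 in L'. injection L'. auto.
Qed.

Lemma Lmap_shuffle u v s : H1 u -> H1 v -> 0 < s < 2 * PI ->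
  Lmap (shuffle u v) (eis s) = Cmult (Li (word_index u) (eis s)) (Li (word_index v) (eis s)).
Proof.
  intros Hu Hv Hs. rewrite Lmap_eq, !Li_word by auto.
  destruct (Good_cw u) as [C Hc]. destruct (Good_cw v) as [D Hd].
  destruct (Good_cW (shuffle u v)) as [E He].
  assert (He' : Good (conv (cw u) (cw v)) E).
  { apply Good_ext with (cW (shuffle u v)); auto. intros m _. symmetry. apply cW_shuffle; auto. }
  destruct (conv_value (cw u) (cw v) C D E s Hc Hd He' Hs) as [E1 E2].
  unfold RS, IS in *.
  rewrite (Series_ext (fun m => cW (shuffle u v) m * cos (INR m * s)) (fun m => conv (cw u) (cw v) m * cos (INR m * s)))
    by (intros; rewrite cW_shuffle; auto).
  rewrite (Series_ext (fun m => cW (shuffle u v) m * sin (INR m * s)) (fun m => conv (cw u) (cw v) m * sin (INR m * s)))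
    by (intros; rewrite cW_shuffle; auto).
  rewrite E1, E2. reflexivity.
Qed.


Lemma Csum_app l1 l2 : Csum (l1 ++ l2) = Cplus (Csum l1) (Csum l2).
Proof. induction l1; simpl. ring. rewrite IHl1. ring. Qed.

Lemma Lmap_app U V z : Lmap (U ++ V) z = Cplus (Lmap U z) (Lmap V z).
Proof. unfold Lmap. rewrite map_app. apply Csum_app. Qed.

Lemma Lmap_cons w U z : Lmap (w :: U) z = Cplus (Li (word_index w) z) (Lmap U z).
Proof. reflexivity. Qed.

Lemma Lmap_nil z : Lmap [] z = RtoC 0.
Proof. reflexivity. Qed.

Lemma Lmap_flat_map {A : Type} (f : A -> list (list bool)) U z :
  Lmap (flat_map f U) z = Csum (map (fun u => Lmap (f u) z) U).
Proof. induction U; simpl; auto. rewrite Lmap_app, IHU. reflexivity. Qed.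

Lemma Csum_scal_r {A : Type} (f : A -> C) (l : list A) c :
  Csum (map (fun a => Cmult (f a) c) l) = Cmult (Csum (map f l)) c.
Proof. induction l; simpl. ring. rewrite IHl. ring. Qed.

Lemma Csum_scal_l {A : Type} (f : A -> C) (l : list A) c :
  Csum (map (fun a => Cmult c (f a)) l) = Cmult c (Csum (map f l)).
Proof. induction l; simpl. ring. rewrite IHl. ring. Qed.

Lemma Csum_ext {A : Type} (f g : A -> C) (l : list A) :
  (forall a, In a l -> f a = g a) -> Csum (map f l) = Csum (map g l).
Proof. induction l; intros H; simpl; auto. rewrite H by (simpl; auto). rewrite IHl; auto. intros; apply H; simpl; auto. Qed.

Lemma Lmap_shuffleL U V s : (forall u, In u U -> H1 u) -> (forall v, In v V -> H1 v) -> 0 < s < 2 * PI ->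
  Lmap (shuffleL U V) (eis s) = Cmult (Lmap U (eis s)) (Lmap V (eis s)).
Proof.
  intros HU HV Hs. unfold shuffleL. rewrite Lmap_flat_map.
  unfold Lmap at 2. rewrite <- Csum_scal_r. apply Csum_ext. intros u Hu.
  rewrite Lmap_flat_map. unfold Lmap at 2. rewrite <- Csum_scal_l. apply Csum_ext. intros v Hv.
  apply Lmap_shuffle; auto.
Qed.

Lemma e1sh_props r w : In w (e1sh r) -> H1 w /\ length w = r.
Proof.
  revert w. induction r; intros w Hw.
  - simpl in Hw. destruct Hw as [<-|[]]. simpl; auto.
  - change (e1sh (S r)) with (shuffleL [[true]] (e1sh r)) in Hw. unfold shuffleL in Hw.
    apply in_flat_map in Hw. destruct Hw as [u [Hu Hw]]. destruct Hu as [<-|[]].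
    apply in_flat_map in Hw. destruct Hw as [v [Hv Hw]].
    destruct (IHr v Hv) as [Hv1 Hv2].
    destruct (shuffle_props _ _ _ Hw) as [L HH]. simpl in L. split; [apply HH; simpl; auto|lia].
Qed.

Lemma Lmap_e1sh r s : 0 < s < 2 * PI -> Lmap (e1sh r) (eis s) = Cpow (Li [1%nat] (eis s)) r.
Proof.
  intros Hs. induction r.
  - simpl. unfold Lmap. simpl. ring.
  - change (e1sh (S r)) with (shuffleL [[true]] (e1sh r)).
    rewrite Lmap_shuffleL; auto.
    + rewrite IHr. rewrite Cpow_S. f_equal. unfold Lmap. simpl. ring.
    + intros u [<-|[]]. simpl. auto.
    + intros v Hv. apply (e1sh_props r v Hv).
Qed.

Lemma locally_circle s0 : 0 < s0 < 2 * PI -> locally s0 (fun s => 0 < s < 2 * PI).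
Proof.
  intros Hs. assert (PI_pos := PI_RGT_0).
  assert (He : 0 < Rmin s0 (2 * PI - s0)) by (apply Rmin_case; lra).
  exists (mkposreal _ He). intros y Hy. simpl in Hy.
  unfold ball in Hy. simpl in Hy. unfold AbsRing_ball, abs, minus, plus, opp in Hy. simpl in Hy.
  apply Rabs_def2 in Hy.
  assert (Rmin s0 (2 * PI - s0) <= s0) by apply Rmin_l.
  assert (Rmin s0 (2 * PI - s0) <= 2 * PI - s0) by apply Rmin_r.
  lra.
Qed.

Lemma Lmap_deriv W s0 : (forall w, In w W -> H1 w /\ w <> []) -> 0 < s0 < 2 * PI ->
  is_derive (fun s => Lmap (rmulL W [false]) (eis s)) s0 (Cmult Ci (Lmap W (eis s0))).
Proof.
  intros HW Hs.
  set (c := cW W). set (d := cW (rmulL W [false])).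
  destruct (Good_cW W) as [Cc Hc]. fold c in Hc.
  destruct (Good_cW (rmulL W [false])) as [Dd Hd]. fold d in Hd.
  assert (Hdc : forall m, (1 <= m)%nat -> d m * INR m = c m).
  { intros m _. unfold d, c, rmulL. rewrite cW_map_snoc.
    - reflexivity.
    - intros w Hw. destruct (HW w Hw) as [H1w Hne]. split; auto. apply H1_snoc; auto. }
  assert (Hc0 : c 0%nat = 0) by (apply cW_zero; auto).
  apply (is_derive_ext_loc (fun s => (RS d s, IS d s) : C)).
  { eapply filter_imp; [|apply (locally_circle s0 Hs)]. intros s Hs'. simpl. symmetry. apply Lmap_eq; auto. }
  rewrite Lmap_eq by auto. fold c.
  eapply is_derive_valC.
  { apply is_derive_pairC.
    - apply is_derive_Reals.
      apply (circle_deriv_gen c d (fun m x => - sin (INR m * x)) (fun m x => cos (INR m * x)) Cc s0 Hc Hs Hdc).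
      + intros x Hx p k Hpk. rewrite !rsum_opp.
        replace (- rsum k (fun m => sin (INR m * x)) - - rsum p (fun m => sin (INR m * x))) with
          (- (rsum k (fun m => sin (INR m * x)) - rsum p (fun m => sin (INR m * x)))) by ring.
        rewrite Rabs_Ropp. apply sin_tail; auto.
      + intros x. rewrite Hc0. ring.
      + intros m x. apply is_derive_Reals. auto_derive; auto. ring.
      + intros x Hx. apply (RS_series d Dd x Hd Hx).
    - apply is_derive_Reals.
      apply (circle_deriv_gen c d (fun m x => cos (INR m * x)) (fun m x => sin (INR m * x)) Cc s0 Hc Hs Hdc).
      + intros x Hx p k Hpk. apply cos_tail; auto.
      + intros x. rewrite Hc0. ring.
      + intros m x. apply is_derive_Reals. auto_derive; auto. ring.
      + intros x Hx. apply (IS_series d Dd x Hd Hx). }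
  unfold RS, IS. rewrite (Series_ext (fun m => c m * - sin (INR m * s0)) (fun m => - (c m * sin (INR m * s0)))) by (intros; ring).
  rewrite Series_opp. unfold Ci, Cmult. simpl. f_equal; ring.
Qed.


Lemma Csum_flat_map {A B : Type} (G : B -> C) (f : A -> list B) (l : list A) :
  Csum (map G (flat_map f l)) = Csum (map (fun a => Csum (map G (f a))) l).
Proof. induction l; simpl; auto. rewrite map_app, Csum_app, IHl. reflexivity. Qed.

Lemma Csum_filter {A : Type} (G : A -> C) (P : A -> bool) (l : list A) :
  Csum (map G (filter P l)) = Csum (map (fun a => if P a then G a else RtoC 0) l).
Proof.
  induction l; simpl; auto. destruct (P a); simpl; rewrite IHl; auto. ring.
Qed.

Lemma Csum_zero {A : Type} (l : list A) : Csum (map (fun _ => RtoC 0) l) = RtoC 0.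
Proof. induction l; simpl; auto. rewrite IHl. ring. Qed.

Lemma lists_upto_props m b j : In j (lists_upto m b) -> length j = m /\ List.Forall (fun a => (a <= b)%nat) j.
Proof.
  revert j. induction m; intros j H.
  - simpl in H. destruct H as [<-|[]]. simpl; auto.
  - change (lists_upto (S m) b) with (flat_map (fun x => map (cons x) (lists_upto m b)) (seq 0 (S b))) in H.
    apply in_flat_map in H. destruct H as [x [Hx H]].
    apply in_map_iff in H. destruct H as [j' [<- Hj']].
    apply in_seq in Hx. destruct (IHm j' Hj') as [L F]. simpl. split; auto. constructor; auto; lia.
Qed.

Lemma lists_upto_back n B (G : list nat -> C) :
  Csum (map G (lists_upto (S n) B)) =
  Csum (map (fun j => Csum (map (fun t => G (j ++ [t])) (seq 0 (S B)))) (lists_upto n B)).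
Proof.
  revert G. induction n; intros G.
  - change (lists_upto 1 B) with (flat_map (fun x => map (cons x) [[]]) (seq 0 (S B))).
    rewrite Csum_flat_map.
    change (lists_upto 0 B) with [@nil nat].
    transitivity (Cplus (Csum (map (fun t => G ([] ++ [t])) (seq 0 (S B)))) (RtoC 0)); [|reflexivity].
    rewrite Cplus_0_r. apply Csum_ext. intros a _. simpl. ring.
  - change (lists_upto (S (S n)) B) with (flat_map (fun x => map (cons x) (lists_upto (S n) B)) (seq 0 (S B))).
    change (lists_upto (S n) B) with (flat_map (fun x => map (cons x) (lists_upto n B)) (seq 0 (S B))) at 2.
    rewrite !Csum_flat_map. apply Csum_ext. intros x _.
    rewrite !map_map. rewrite (IHn (fun j => G (x :: j))). reflexivity.
Qed.

Lemma lists_upto_bound n B B' (G : list nat -> C) : (B <= B')%nat ->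
  (forall j, length j = n -> (exists a, In a j /\ (B < a)%nat) -> G j = RtoC 0) ->
  Csum (map G (lists_upto n B')) = Csum (map G (lists_upto n B)).
Proof.
  revert G. induction n; intros G HB HG; [reflexivity|].
  change (lists_upto (S n) B') with (flat_map (fun x => map (cons x) (lists_upto n B')) (seq 0 (S B'))).
  change (lists_upto (S n) B) with (flat_map (fun x => map (cons x) (lists_upto n B)) (seq 0 (S B))).
  rewrite !Csum_flat_map.
  replace (S B') with (S B + (B' - B))%nat by lia. rewrite seq_app, map_app, Csum_app.
  rewrite (Csum_ext _ (fun _ => RtoC 0) (seq (0 + S B) (B' - B))).
  - rewrite Csum_zero, Cplus_0_r. apply Csum_ext. intros x _. rewrite !map_map.
    apply (IHn (fun j => G (x :: j))); auto.
    intros j Hj [a [Ha Hb]]. apply HG. simpl; auto. exists a. simpl; auto.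
  - intros x Hx. apply in_seq in Hx. rewrite map_map.
    rewrite (Csum_ext _ (fun _ => RtoC 0)); [apply Csum_zero|].
    intros j Hj. apply HG. simpl. f_equal. apply (lists_upto_props n B' j Hj).
    exists x. simpl. split; auto. lia.
Qed.

Lemma lsum_app l1 l2 : lsum (l1 ++ l2) = (lsum l1 + lsum l2)%nat.
Proof. induction l1; simpl; auto. unfold lsum in *. simpl. rewrite IHl1. lia. Qed.

Lemma lsum_snoc l x : lsum (l ++ [x]) = (lsum l + x)%nat.
Proof. rewrite lsum_app. simpl. lia. Qed.

Lemma firstn_snoc_le {A : Type} (l : list A) x s : (s <= length l)%nat -> firstn s (l ++ [x]) = firstn s l.
Proof.
  intros H. rewrite firstn_app. replace (s - length l)%nat with 0%nat by lia. simpl. apply app_nil_r.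
Qed.

Lemma forallb_ext_in {A : Type} (f g : A -> bool) (l : list A) :
  (forall a, In a l -> f a = g a) -> forallb f l = forallb g l.
Proof. induction l; intros H; simpl; auto. rewrite H by (simpl; auto). rewrite IHl; auto. intros; apply H; simpl; auto. Qed.

Lemma precb_snoc j q t x : length j = length q ->
  precb (j ++ [t]) (q ++ [x]) = (precb j q && Nat.leb (lsum j + t) (lsum q + x))%bool.
Proof.
  intros L. unfold precb. rewrite length_app. simpl length.
  replace (S (length q + 1)) with (S (length q) + 1)%nat by lia.
  rewrite seq_app, forallb_app. change (seq (0 + S (length q)) 1) with [S (length q)]. cbn [forallb].
  f_equal.
  - apply forallb_ext_in. intros s Hs. apply in_seq in Hs.
    rewrite !firstn_snoc_le by lia. reflexivity.
  - rewrite (firstn_all2 (j ++ [t])) by (rewrite length_app; simpl; lia).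
    rewrite (firstn_all2 (q ++ [x])) by (rewrite length_app; simpl; lia).
    rewrite !lsum_snoc. rewrite Bool.andb_true_r. reflexivity.
Qed.

Lemma In_le_lsum a l : In a l -> (a <= lsum l)%nat.
Proof. induction l; simpl; [tauto|]. intros [->|H]; unfold lsum in *; simpl; [lia|]. specialize (IHl H). lia. Qed.

Lemma precb_lsum j q : length j = length q -> precb j q = true -> (lsum j <= lsum q)%nat.
Proof.
  intros L H. unfold precb in H. rewrite forallb_forall in H.
  specialize (H (length q) ltac:(apply in_seq; lia)).
  apply Nat.leb_le in H. rewrite !firstn_all2 in H by lia. exact H.
Qed.

Lemma precb_entries j q : length j = length q -> precb j q = true -> forall a, In a j -> (a <= lsum q)%nat.
Proof. intros L H a Ha. assert (H1 := precb_lsum j q L H). assert (H2 := In_le_lsum a j Ha). lia. Qed.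

Lemma prec_set_snoc qb x (G : list nat -> C) :
  Csum (map G (prec_set (qb ++ [x]))) =
  Csum (map (fun j => Csum (map (fun t => G (j ++ [t])) (seq 0 (S (lsum qb + x - lsum j))))) (prec_set qb)).
Proof.
  unfold prec_set. rewrite !Csum_filter. rewrite length_app. simpl length.
  rewrite Nat.add_1_r, lsum_snoc, lists_upto_back.
  set (Bd := (lsum qb + x)%nat).
  rewrite (Csum_ext _ (fun j => if precb j qb then Csum (map (fun t => G (j ++ [t])) (seq 0 (S (Bd - lsum j)))) else RtoC 0)).
  - apply lists_upto_bound; [unfold Bd; lia|].
    intros j Lj [a [Ha Hb]]. destruct (precb j qb) eqn:E; auto.
    assert (H := precb_entries j qb Lj E a Ha). lia.
  - intros j Hj. destruct (lists_upto_props _ _ _ Hj) as [Lj _].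
    rewrite (Csum_ext _ (fun t => if precb j qb then (if Nat.leb (lsum j + t) Bd then G (j ++ [t]) else RtoC 0) else RtoC 0)).
    2:{ intros t _. rewrite precb_snoc by auto. destruct (precb j qb); reflexivity. }
    destruct (precb j qb) eqn:E.
    + assert (HL := precb_lsum j qb Lj E).
      replace (S Bd) with (S (Bd - lsum j) + lsum j)%nat by (unfold Bd in *; lia).
      rewrite seq_app, map_app, Csum_app.
      rewrite (Csum_ext _ (fun _ => RtoC 0) (seq (0 + S (Bd - lsum j)) (lsum j))).
      * rewrite Csum_zero, Cplus_0_r. apply Csum_ext. intros t Ht. apply in_seq in Ht.
        replace (Nat.leb (lsum j + t) Bd) with true; auto. symmetry. apply Nat.leb_le. lia.
      * intros t Ht. apply in_seq in Ht. replace (Nat.leb (lsum j + t) Bd) with false; auto.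
        symmetry. apply Nat.leb_gt. lia.
    + apply Csum_zero.
Qed.


Lemma rprod_ext n F G : (forall k, (k < n)%nat -> F k = G k) -> rprod n F = rprod n G.
Proof.
  induction n; intros H; simpl; auto.
  rewrite IHn by (intros; apply H; lia). rewrite H by lia. reflexivity.
Qed.

Lemma Ccoef_snoc qb x j t : length j = length qb ->
  Ccoef (qb ++ [x]) (j ++ [t]) =
  Ccoef qb j * ((-1) ^ t * INR (fact (lsum qb + x - lsum j)) / INR (fact (lsum qb + x - lsum j - t))).
Proof.
  intros L. unfold Ccoef. rewrite length_app. simpl length. rewrite Nat.add_1_r.
  change (rprod (S (length qb)) ?F) with (rprod (length qb) F * F (length qb)).
  f_equal.
  - apply rprod_ext. intros s Hs. cbv beta.
    rewrite app_nth1 by lia. rewrite !firstn_snoc_le by lia. reflexivity.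
  - cbv beta. rewrite app_nth2 by lia. replace (length qb - length j)%nat with 0%nat by lia. simpl nth.
    rewrite (firstn_snoc_le j t (length qb)) by lia.
    rewrite (firstn_all2 (n := length qb) j) by lia.
    rewrite (firstn_all2 (n := S (length qb)) (qb ++ [x])) by (rewrite length_app; simpl; lia).
    rewrite (firstn_all2 (n := S (length qb)) (j ++ [t])) by (rewrite length_app; simpl; lia).
    rewrite !lsum_snoc. rewrite Nat.sub_add_distr. reflexivity.
Qed.

Lemma Bcoef_snoc q x : Bcoef (q ++ [x]) = Bcoef q * / INR (lsum q + x + S (length q)).
Proof.
  unfold Bcoef. rewrite length_app. simpl length. rewrite Nat.add_1_r.
  change (rprod (S (length q)) ?F) with (rprod (length q) F * F (length q)).
  f_equal.
  - apply rprod_ext. intros s Hs. cbv beta. rewrite firstn_snoc_le by lia. reflexivity.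
  - cbv beta. rewrite firstn_all2 by (rewrite length_app; simpl; lia). rewrite lsum_snoc. reflexivity.
Qed.

Lemma combine_snoc {A B : Type} (l1 : list A) (l2 : list B) a b : length l1 = length l2 ->
  combine (l1 ++ [a]) (l2 ++ [b]) = combine l1 l2 ++ [(a, b)].
Proof.
  revert l2. induction l1; intros l2 L; destruct l2; simpl in *; try lia; auto.
  rewrite IHl1 by lia. reflexivity.
Qed.

Definition wstepL (W : list (list bool)) (jr : nat * nat) : list (list bool) :=
  rmulL (shuffleL W (e1sh (snd jr))) (repeat false (S (fst jr))).

Lemma wjr_eq j r : wjr j r = fold_left wstepL (combine j r) [[]].
Proof. reflexivity. Qed.

Lemma wjr_snoc j r t y : length j = length r ->
  wjr (j ++ [t]) (r ++ [y]) = rmulL (shuffleL (wjr j r) (e1sh y)) (repeat false (S t)).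
Proof.
  intros L. rewrite !wjr_eq, combine_snoc, fold_left_app by auto. reflexivity.
Qed.

Definition WP (W : list (list bool)) : Prop := forall w, In w W -> H1 w /\ w <> [].

Lemma in_rmulL W l w : In w (rmulL W l) -> exists w', In w' W /\ w = w' ++ l.
Proof. unfold rmulL. intros H. apply in_map_iff in H. destruct H as [w' [<- H]]. eauto. Qed.

Lemma rmulL_WP W l : WP W -> WP (rmulL W l).
Proof.
  intros H w Hw. destruct (in_rmulL W l w Hw) as [w' [Hw' ->]].
  destruct (H w' Hw') as [H1 H2]. destruct w'; [contradiction|]. simpl. split; auto. discriminate.
Qed.

Lemma in_shuffleL U V w : In w (shuffleL U V) -> exists u v, In u U /\ In v V /\ In w (shuffle u v).
Proof.
  unfold shuffleL. intros H. apply in_flat_map in H. destruct H as [u [Hu H]].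
  apply in_flat_map in H. destruct H as [v [Hv H]]. eauto.
Qed.

Lemma wstepL_WP W t y : (forall u, In u W -> H1 u /\ (u <> [] \/ (1 <= y)%nat)) -> WP (wstepL W (t, y)).
Proof.
  intros H w Hw. unfold wstepL in Hw. simpl in Hw.
  destruct (in_rmulL _ _ _ Hw) as [w' [Hw' ->]].
  destruct (in_shuffleL _ _ _ Hw') as [u [v [Hu [Hv Hs]]]].
  destruct (H u Hu) as [Hu1 Hu2]. destruct (e1sh_props y v Hv) as [Hv1 Hv2].
  destruct (shuffle_props _ _ _ Hs) as [L HH].
  assert (w' <> []).
  { intros ->. simpl in L. destruct Hu2 as [Hu2|Hu2]; [destruct u; [contradiction|simpl in L; lia]|lia]. }
  assert (H1 w') by auto.
  destruct w'; [contradiction|]. simpl. split; auto. discriminate.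
Qed.

Lemma fold_wstepL_WP l W : WP W -> WP (fold_left wstepL l W).
Proof.
  revert W. induction l as [|[t y] l IH]; intros W H; simpl; auto.
  apply IH. apply wstepL_WP. intros u Hu. destruct (H u Hu). auto.
Qed.

Lemma wjr_WP j r : length j = length r -> r <> [] -> (1 <= hd 0%nat r)%nat -> WP (wjr j r).
Proof.
  intros L Hr Hh. destruct r as [|y0 r]; [contradiction|]. destruct j as [|t0 j]; [simpl in L; lia|].
  rewrite wjr_eq. simpl combine. simpl fold_left. apply fold_wstepL_WP.
  apply wstepL_WP. intros u [<-|[]]. simpl in Hh. split; simpl; auto.
Qed.

Lemma wjr_H1 j r : length j = length r -> (r = [] \/ (1 <= hd 0%nat r)%nat) -> forall w, In w (wjr j r) -> H1 w.
Proof.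
  intros L [->|Hh] w Hw.
  - destruct j; [|simpl in L; lia]. simpl in Hw. destruct Hw as [<-|[]]. simpl; auto.
  - destruct r as [|y0 r]. { destruct j; [|simpl in L; lia]. simpl in Hw. destruct Hw as [<-|[]]. simpl; auto. }
    apply (wjr_WP j (y0 :: r) L ltac:(discriminate) Hh w Hw).
Qed.

Lemma rmulL_nil W : rmulL W [] = W.
Proof. unfold rmulL. rewrite (map_ext _ (fun w => w)) by (intros; apply app_nil_r). apply map_id. Qed.

Lemma rmulL_app W l1 l2 : rmulL (rmulL W l1) l2 = rmulL W (l1 ++ l2).
Proof. unfold rmulL. rewrite map_map. apply map_ext. intros. symmetry. apply app_assoc. Qed.

Lemma repeat_S_snoc (t : nat) : repeat false (S t) = repeat false t ++ [false].
Proof. induction t; simpl; auto. f_equal. exact IHt. Qed.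


Definition cM (M t : nat) : R := (-1) ^ t * INR (fact M) / INR (fact (M - t)).

Definition Tsum (M : nat) (W : list (list bool)) (s : R) : C :=
  Csum (map (fun t => Cmult (RtoC (cM M t))
                (Cmult (Cpow (Cmult Ci (RtoC s)) (M - t)) (Lmap (rmulL W (repeat false (S t))) (eis s))))
            (seq 0 (S M))).

Lemma cM_rec M t : (t < M)%nat -> cM M t * INR (M - t) = - cM M (S t).
Proof.
  intros H. unfold cM.
  replace (M - t)%nat with (S (M - S t)) by lia.
  rewrite fact_simpl, mult_INR.
  assert (0 < INR (fact (M - S t))) by (apply lt_0_INR, lt_O_fact).
  assert (0 < INR (S (M - S t))) by (apply lt_0_INR; lia).
  simpl pow. field. lra.
Qed.

Lemma Csum_tele (y : nat -> C) M :
  Csum (map (fun t => Cminus (y t) (y (S t))) (seq 0 M)) = Cminus (y 0%nat) (y M).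
Proof.
  induction M.
  - simpl. ring.
  - rewrite seq_S, map_app, Csum_app, IHM. simpl. ring.
Qed.

Lemma Tsum_deriv M W s0 : WP W -> 0 < s0 < 2 * PI ->
  is_derive (Tsum M W) s0 (Cmult Ci (Cmult (Cpow (Cmult Ci (RtoC s0)) M) (Lmap W (eis s0)))).
Proof.
  intros HW Hs. unfold Tsum.
  set (P := fun k => Cpow (Cmult Ci (RtoC s0)) k).
  set (X := fun k => Lmap (rmulL W (repeat false k)) (eis s0)).
  eapply is_derive_valC.
  { apply is_derive_Csum. intros t _.
    apply is_derive_Cscal. apply is_derive_Cmult; [apply is_derive_ipow|].
    eapply is_derive_ext.
    { intros s. rewrite repeat_S_snoc, <- rmulL_app. reflexivity. }
    apply Lmap_deriv; auto. apply rmulL_WP; auto. }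
  set (y := fun t => Cmult (RtoC (cM M t)) (Cmult Ci (Cmult (P (M - t)%nat) (X t)))).
  rewrite seq_S, map_app, Csum_app. simpl map. simpl Csum.
  rewrite (Csum_ext _ (fun t => Cminus (y t) (y (S t)))).
  - rewrite Csum_tele. replace (M - M)%nat with 0%nat by lia.
    assert (H0 : cM M 0 = 1).
    { unfold cM. rewrite Nat.sub_0_r. simpl pow. field. apply not_0_INR, fact_neq_0. }
    assert (HX : X 0%nat = Lmap W (eis s0)) by (unfold X; simpl repeat; rewrite rmulL_nil; reflexivity).
    unfold y. rewrite Nat.sub_0_r, Nat.sub_diag, H0, HX. unfold P. simpl INR. simpl Cpow.
    fold (X M). ring.
  - intros t Ht. apply in_seq in Ht.
    unfold y. fold (P (M - t)%nat). fold (P (M - t - 1)%nat).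
    replace (M - t - 1)%nat with (M - S t)%nat by lia.
    assert (E := cM_rec M t ltac:(lia)).
    assert (E' : RtoC (cM M (S t)) = Copp (Cmult (RtoC (cM M t)) (RtoC (INR (M - t))))).
    { rewrite <- RtoC_mult, E. unfold RtoC, Copp. simpl. f_equal; ring. }
    change (Lmap (rmulL W (false :: repeat false t)) (eis s0)) with (X (S t)).
    fold (X t). rewrite E'. ring.
Qed.


Definition FF (qb rr : list nat) (s : R) : C :=
  Csum (map (fun j => Cmult (RtoC (Ccoef qb j))
                 (Cmult (Cpow (Cmult Ci (RtoC s)) (lsum qb - lsum j)) (Lmap (wjr j rr) (eis s))))
            (prec_set qb)).

Lemma prec_set_in j q : In j (prec_set q) -> length j = length q /\ precb j q = true.
Proof.
  unfold prec_set. intros H. apply filter_In in H. destruct H as [H1 H2].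
  split; auto. apply (lists_upto_props _ _ _ H1).
Qed.

Lemma FF_snoc_eq qb rr x y s : length qb = length rr ->
  FF (qb ++ [x]) (rr ++ [y]) s =
  Csum (map (fun j => Cmult (RtoC (Ccoef qb j))
                (Tsum (lsum qb + x - lsum j) (shuffleL (wjr j rr) (e1sh y)) s)) (prec_set qb)).
Proof.
  intros L. unfold FF. rewrite prec_set_snoc. apply Csum_ext. intros j Hj.
  destruct (prec_set_in j qb Hj) as [Lj _].
  unfold Tsum. rewrite <- Csum_scal_l. apply Csum_ext. intros t Ht.
  rewrite Ccoef_snoc by auto. rewrite !lsum_snoc. rewrite wjr_snoc by lia.
  rewrite Nat.sub_add_distr. unfold cM. rewrite RtoC_mult. ring.
Qed.

Lemma shuffleL_WP U y : (forall u, In u U -> H1 u /\ (u <> [] \/ (1 <= y)%nat)) -> WP (shuffleL U (e1sh y)).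
Proof.
  intros H w Hw.
  destruct (in_shuffleL _ _ _ Hw) as [u [v [Hu [Hv Hs]]]].
  destruct (H u Hu) as [Hu1 Hu2]. destruct (e1sh_props y v Hv) as [Hv1 Hv2].
  destruct (shuffle_props _ _ _ Hs) as [L HH].
  split; auto. intros ->. simpl in L.
  destruct Hu2 as [Hu2|Hu2]; [destruct u; [contradiction|simpl in L; lia]|lia].
Qed.

Lemma FF_deriv qb rr x y s0 : length qb = length rr ->
  (rr = [] -> (1 <= y)%nat) -> (rr <> [] -> (1 <= hd 0%nat rr)%nat) -> 0 < s0 < 2 * PI ->
  is_derive (FF (qb ++ [x]) (rr ++ [y])) s0
    (Cmult Ci (Cmult (Cpow (Cmult Ci (RtoC s0)) x)
       (Cmult (Cpow (Li [1%nat] (eis s0)) y) (FF qb rr s0)))).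
Proof.
  intros L Hy Hh Hs.
  assert (HU : forall j, In j (prec_set qb) ->
            forall u, In u (wjr j rr) -> H1 u /\ (u <> [] \/ (1 <= y)%nat)).
  { intros j Hj u Hu. destruct (prec_set_in j qb Hj) as [Lj _].
    destruct rr as [|r0 rr'].
    - destruct j; [|simpl in Lj, L; lia]. simpl in Hu. destruct Hu as [<-|[]].
      split; [simpl; auto|right; auto].
    - assert (Ljr : length j = length (r0 :: rr')) by congruence.
      assert (HW := wjr_WP j (r0 :: rr') Ljr ltac:(discriminate) (Hh ltac:(discriminate))).
      destruct (HW u Hu). auto. }
  eapply is_derive_ext.
  { intros s. symmetry. apply FF_snoc_eq; auto. }
  eapply is_derive_valC.
  { apply is_derive_Csum. intros j Hj. apply is_derive_Cscal. apply Tsum_deriv; auto.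
    apply shuffleL_WP. apply HU; auto. }
  unfold FF. rewrite <- !Csum_scal_l. apply Csum_ext. intros j Hj.
  destruct (prec_set_in j qb Hj) as [Lj Pj].
  assert (Hl := precb_lsum j qb Lj Pj).
  replace (lsum qb + x - lsum j)%nat with (x + (lsum qb - lsum j))%nat by lia.
  rewrite Cpow_add_r.
  rewrite Lmap_shuffleL; auto.
  - rewrite Lmap_e1sh by auto. ring.
  - intros u Hu. apply (HU j Hj u Hu).
  - intros v Hv. apply (e1sh_props y v Hv).
Qed.


Lemma lead0_le l : (lead0 l <= length l)%nat.
Proof. induction l as [|a l IH]; simpl; [lia|]. destruct a; simpl; lia. Qed.

Lemma lead0_app_lt l1 l2 : (lead0 l1 < length l1)%nat -> lead0 (l1 ++ l2) = lead0 l1.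
Proof.
  induction l1 as [|a l1 IH]; simpl; intros H; [lia|].
  destruct a; simpl in *; auto. rewrite IH by lia. reflexivity.
Qed.

Lemma lead0_app_eq l1 l2 : lead0 l1 = length l1 -> lead0 (l1 ++ l2) = (length l1 + lead0 l2)%nat.
Proof.
  induction l1 as [|a l1 IH]; simpl; intros H; auto.
  destruct a; simpl in *; [|lia]. rewrite IH by lia. reflexivity.
Qed.

Lemma lead0_skipn l : (lead0 l < length l)%nat -> exists a rest, skipn (lead0 l) l = a :: rest /\ (1 <= a)%nat.
Proof.
  induction l as [|a l IH]; simpl; intros H; [lia|].
  destruct a as [|a]; simpl in *.
  - apply IH. lia.
  - exists (S a), l. split; auto. lia.
Qed.

Lemma skipn_snoc_le {A : Type} (l : list A) x k : (k <= length l)%nat -> skipn k (l ++ [x]) = skipn k l ++ [x].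
Proof.
  intros H. rewrite skipn_app. replace (k - length l)%nat with 0%nat by lia. reflexivity.
Qed.

Lemma lsum_firstn_skipn k l : lsum l = (lsum (firstn k l) + lsum (skipn k l))%nat.
Proof. rewrite <- lsum_app, firstn_skipn. reflexivity. Qed.

Lemma qbar_lsum q r : (lead0 r < length q)%nat -> lsum (qbar q r) = (lsum q + lead0 r)%nat.
Proof.
  intros H. unfold qbar. rewrite (lsum_firstn_skipn (lead0 r) q).
  assert (Hl : length (skipn (lead0 r) q) = (length q - lead0 r)%nat) by apply length_skipn.
  destruct (skipn (lead0 r) q) as [|x rest]; [simpl in Hl; lia|].
  unfold lsum. simpl. fold (lsum rest). lia.
Qed.

Lemma qbar_length q r : (lead0 r < length q)%nat -> length (qbar q r) = (length q - lead0 r)%nat.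
Proof.
  intros H. unfold qbar.
  assert (Hl : length (skipn (lead0 r) q) = (length q - lead0 r)%nat) by apply length_skipn.
  destruct (skipn (lead0 r) q) as [|x rest]; [simpl in Hl; lia|]. simpl in *. lia.
Qed.

Lemma fqr_FF q r s : (lead0 r < length q)%nat ->
  fqr q r s = Cmult (RtoC (Bcoef (firstn (lead0 r) q))) (FF (qbar q r) (skipn (lead0 r) r) s).
Proof.
  intros H. unfold fqr, FF. f_equal. apply Csum_ext. intros j Hj.
  rewrite qbar_lsum by auto. reflexivity.
Qed.

Lemma fqr_zero q r s : lead0 r = length q -> length q = length r ->
  fqr q r s = Cmult (RtoC (Bcoef q)) (Cpow (Cmult Ci (RtoC s)) (lsum q + length q)).
Proof.
  intros H L. unfold fqr, qbar. rewrite H.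
  rewrite skipn_all2 by lia. rewrite (skipn_all2 r) by lia. rewrite firstn_all2 by lia.
  change (prec_set []) with [@nil nat]. simpl. unfold Lmap. simpl.
  rewrite Nat.sub_0_r. unfold Ccoef. simpl. change Defs.Ci with Ci. ring.
Qed.

Lemma FF_nil s : FF [] [] s = RtoC 1.
Proof. unfold FF. change (prec_set []) with [@nil nat]. simpl. unfold Lmap, Ccoef. simpl. ring. Qed.

Theorem proposition1 (q r : list nat) :
  length q = length r -> (1 <= length q)%nat ->
  forall s : R, 0 < s < 2 * PI ->
  is_derive (fqr q r) s
    (Cmult Ci
      (Cmult (Cpow (Cmult Ci (RtoC s)) (List.last q 0%nat))
        (Cmult (Cpow (Li (1%nat :: nil) (eis s)) (List.last r 0%nat))
               (fqr (List.removelast q) (List.removelast r) s)))).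
Proof.
  intros L Hn s Hs.
  assert (Hq : q <> []) by (destruct q; simpl in Hn; [lia|discriminate]).
  assert (Hr : r <> []) by (destruct r; simpl in L, Hn; [lia|discriminate]).
  destruct (exists_last Hq) as [q' [qn Eq]]. destruct (exists_last Hr) as [r' [rn Er]].
  subst q r. rewrite !last_last, !removelast_last.
  rewrite !length_app in L. simpl in L. assert (L' : length q' = length r') by lia. clear L Hn.
  destruct (Nat.lt_ge_cases (lead0 r') (length r')) as [Hk|Hk].
  -
    set (k := lead0 r') in *.
    assert (Ek : lead0 (r' ++ [rn]) = k) by (apply lead0_app_lt; auto).
    assert (Hqb : qbar (q' ++ [qn]) (r' ++ [rn]) = qbar q' r' ++ [qn]).
    { unfold qbar. rewrite Ek. fold k. rewrite skipn_snoc_le by lia. rewrite firstn_snoc_le by lia.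
      assert (Hl : length (skipn k q') = (length q' - k)%nat) by apply length_skipn.
      destruct (skipn k q') as [|x rest]; [simpl in Hl; lia|]. reflexivity. }
    destruct (lead0_skipn r' Hk) as [a [rest [Ea Ha]]]. fold k in Ea.
    eapply is_derive_ext.
    { intros t. symmetry. apply fqr_FF. rewrite length_app. simpl. lia. }
    rewrite Ek, Hqb, firstn_snoc_le by lia. rewrite skipn_snoc_le by lia.
    eapply is_derive_valC.
    { apply is_derive_Cscal. apply FF_deriv; auto.
      - rewrite qbar_length by lia. rewrite length_skipn. fold k. lia.
      - rewrite Ea. discriminate.
      - intros _. rewrite Ea. simpl. auto. }
    rewrite (fqr_FF q' r') by lia. fold k. ring.
  - assert (Hk' : lead0 r' = length r') by (assert (H := lead0_le r'); lia).
    assert (Hz := fqr_zero q' r' s ltac:(lia) L').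
    destruct rn as [|rn].
    +
      assert (E0 : lead0 (r' ++ [0%nat]) = length (q' ++ [qn])).
      { rewrite lead0_app_eq by auto. rewrite length_app. simpl. lia. }
      eapply is_derive_ext.
      { intros t. symmetry. apply fqr_zero; auto. rewrite !length_app. simpl. lia. }
      eapply is_derive_valC.
      { apply is_derive_Cscal. apply is_derive_ipow. }
      rewrite Hz. rewrite Bcoef_snoc. rewrite lsum_snoc, length_app. simpl length.
      replace (lsum q' + qn + (length q' + 1))%nat with (lsum q' + qn + S (length q'))%nat by lia.
      set (N := (lsum q' + qn + S (length q'))%nat).
      replace (N - 1)%nat with (qn + (lsum q' + length q'))%nat by (unfold N; lia).
      rewrite Cpow_add_r.
      assert (HN : / INR N * INR N = 1) by (field; apply not_0_INR; unfold N; lia).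
      set (P1 := Cpow (Cmult Ci (RtoC s)) qn).
      set (P2 := Cpow (Cmult Ci (RtoC s)) (lsum q' + length q')).
      transitivity (Cmult (RtoC (Bcoef q' * (/ INR N * INR N))) (Cmult Ci (Cmult P1 P2))).
      * rewrite !RtoC_mult. ring.
      * rewrite HN, Rmult_1_r. simpl Cpow. ring.
    +
      set (k := length r') in *.
      assert (E1 : lead0 (r' ++ [S rn]) = k) by (rewrite lead0_app_eq by auto; simpl; lia).
      eapply is_derive_ext.
      { intros t. symmetry. apply fqr_FF. rewrite E1, length_app. simpl. lia. }
      rewrite E1.
      rewrite firstn_snoc_le by lia. rewrite firstn_all2 by lia.
      rewrite skipn_snoc_le by lia. rewrite skipn_all2 by lia.
      assert (Hqb : qbar (q' ++ [qn]) (r' ++ [S rn]) = [] ++ [(lsum q' + k + qn)%nat]).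
      { unfold qbar. rewrite E1. rewrite skipn_snoc_le by lia. rewrite skipn_all2 by lia.
        rewrite firstn_snoc_le by lia. rewrite firstn_all2 by lia. reflexivity. }
      rewrite Hqb.
      eapply is_derive_valC.
      { apply is_derive_Cscal. apply FF_deriv; auto.
        - intros _. lia.
        - intros H; contradiction. }
      rewrite FF_nil, Hz.
      replace (lsum q' + k + qn)%nat with (qn + (lsum q' + length q'))%nat by (unfold k; lia).
      rewrite Cpow_add_r. ring.
Qed.
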